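(* Assume $h\in\mathcal H$, where $\mathcal H=\{h: h>S/\ln(1+S/\lambda_0)-S-\lambda_0\}$. (iii) $J_{\rm K\text{-}L}$ attains its unique minimum over $\Theta$ at a point $\hat\vartheta$, which is the unique solution of $J'_{\rm K\text{-}L}(\hat\vartheta)=0$. Its location depends on the sign of $h$: - if $h>0$, then $\hat\vartheta\in(\vartheta_0-\delta,\vartheta_0)$; - if $h<0$, then $\hat\vartheta\in(\vartheta_0,\vartheta_0+\delta)$; - if $h=0$, then $\hat\vartheta=\vartheta_0$. (iv) If in addition $h\neq0$, there exist constants $m,M>0$ such that for all $\vartheta\in\Theta$ $$m|\vartheta-\hat\vartheta|\le|J'_{\rm K\text{-}L}(\vartheta)|\le M|\vartheta-\hat\vartheta|$$ and $$\frac m2(\vartheta-\hat\vartheta)^2\le J_{\rm K\text{-}L}(\vartheta)-J_{\rm K\text{-}L}(\hat\vartheta)\le\frac M2(\vartheta-\hat\vartheta)^2.$$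
   Context: Fix constants $S>0$, $\lambda_0>0$, $\kappa\in(0,1/2)$, $\delta>0$, $\tau>0$, and reals $\alpha<\beta$ such that $(\alpha-\delta,\beta+\delta)\subset(0,\tau-\delta)$. Put $\Theta_0=(\alpha,\beta)$ and $\Theta=(\alpha-\delta,\beta+\delta)$. Let $$\psi(x)=(x/\delta)^\kappa\mathbf 1_{\{0<x<\delta\}}+\mathbf 1_{\{x\ge\delta\}}.$$ The theoretical intensity is $\lambda(\vartheta,t)=S\psi(t-\vartheta)+\lambda_0$ for $t\in[0,\tau]$, $\vartheta\in\Theta$. The true intensity is $\lambda_*(\vartheta_0,t)=(S+h)\psi(t-\vartheta_0)+\lambda_0$, with fixed $\vartheta_0\in\Theta_0$ and fixed $h\in\mathbb R$. The Kullback–Leibler divergence is $$J_{\rm K\text{-}L}(\vartheta)=\int_{\vartheta\wedge\vartheta_0}^\tau\Bigl[\frac{\lambda(\vartheta,t)}{\lambda_*(\vartheta_0,t)}-1-\ln\frac{\lambda(\vartheta,t)}{\lambda_*(\vartheta_0,t)}\Bigr]\lambda_*(\vartheta_0,t)\,dt,\qquad\vartheta\in\Theta.$$ *)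

(* Defs.v *)
From Stdlib Require Import Reals.
From Coquelicot Require Import Coquelicot.
Open Scope R_scope.

Definition psi (kappa delta x : R) : R :=
  if Rlt_dec 0 x then
    (if Rlt_dec x delta then Rpower (x / delta) kappa else 1)
  else 0.

Definition lam (S lambda0 kappa delta theta t : R) : R :=
  S * psi kappa delta (t - theta) + lambda0.

Definition lam_star (S h lambda0 kappa delta theta0 t : R) : R :=
  (S + h) * psi kappa delta (t - theta0) + lambda0.

Definition J_KL (S h lambda0 kappa delta tau theta0 theta : R) : R :=
  RInt (fun t =>
          let r := lam S lambda0 kappa delta theta t
                   / lam_star S h lambda0 kappa delta theta0 t in
          (r - 1 - ln r) * lam_star S h lambda0 kappa delta theta0 t)
       (Rmin theta theta0) tau.

(* Main.v *)
From Stdlib Require Import Reals Lra.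
From Coquelicot Require Import Coquelicot.
Require Import Defs.
Open Scope R_scope.

Lemma exRc (f : R -> R) a b :
  (forall z, Rmin a b <= z <= Rmax a b -> continuous f z) -> ex_RInt f a b.
Proof. intros H. apply (@ex_RInt_continuous R_CompleteNormedModule). auto. Qed.

Ltac toR := match goal with |- @eq _ ?a ?b => change (@eq R a b) end.

Lemma RInt_cR a b c : RInt (fun _ => c) a b = (b - a) * c.
Proof. rewrite RInt_const. reflexivity. Qed.

Lemma RInt_scalR (f : R -> R) a b c : ex_RInt f a b -> RInt (fun x => c * f x) a b = c * RInt f a b.
Proof. intros H. exact (RInt_scal f a b c H). Qed.

Lemma RInt_plusR (f g : R -> R) a b : ex_RInt f a b -> ex_RInt g a b ->
  RInt (fun x => f x + g x) a b = RInt f a b + RInt g a b.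
Proof. intros H1 H2. exact (RInt_plus f g a b H1 H2). Qed.

Lemma RInt_minusR (f g : R -> R) a b : ex_RInt f a b -> ex_RInt g a b ->
  RInt (fun x => f x - g x) a b = RInt f a b - RInt g a b.
Proof. intros H1 H2. exact (RInt_minus f g a b H1 H2). Qed.

Lemma ex_RInt_plusR (f g : R -> R) a b : ex_RInt f a b -> ex_RInt g a b ->
  ex_RInt (fun x => f x + g x) a b.
Proof. intros H1 H2. exact (ex_RInt_plus f g a b H1 H2). Qed.

Lemma ex_RInt_minusR (f g : R -> R) a b : ex_RInt f a b -> ex_RInt g a b ->
  ex_RInt (fun x => f x - g x) a b.
Proof. intros H1 H2. exact (ex_RInt_minus f g a b H1 H2). Qed.

Lemma ex_RInt_scalR (f : R -> R) a b c : ex_RInt f a b -> ex_RInt (fun x => c * f x) a b.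
Proof. intros H1. exact (ex_RInt_scal f a b c H1). Qed.

Lemma RInt_extR (f g : R -> R) a b : (forall x, Rmin a b < x < Rmax a b -> f x = g x) ->
  RInt f a b = RInt g a b.
Proof. intros H. apply RInt_ext. exact H. Qed.

Lemma is_RInt_uniqueR (f : R -> R) a b l : is_RInt f a b l -> RInt f a b = l.
Proof. intros H. exact (is_RInt_unique f a b l H). Qed.

Definition pw (p v : R) : R := if Rlt_dec 0 v then Rpower v p else 0.

Lemma pw_nonpos p v : v <= 0 -> pw p v = 0.
Proof. intros H; unfold pw; destruct (Rlt_dec 0 v); [lra|auto]. Qed.

Lemma pw_pos p v : 0 < v -> pw p v = Rpower v p.
Proof. intros H; unfold pw; destruct (Rlt_dec 0 v); [auto|lra]. Qed.

Lemma Rpower_pos x y : 0 < Rpower x y.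
Proof. unfold Rpower; apply exp_pos. Qed.

Lemma pw_ge0 p v : 0 <= pw p v.
Proof. unfold pw; destruct (Rlt_dec 0 v); [left; apply Rpower_pos|lra]. Qed.

Lemma Rpower_1_base y : Rpower 1 y = 1.
Proof. unfold Rpower; rewrite ln_1, Rmult_0_r; apply exp_0. Qed.

Lemma pw_1 p : pw p 1 = 1.
Proof. rewrite pw_pos by lra; apply Rpower_1_base. Qed.

Lemma pw_lt_mono p u v : 0 < p -> 0 <= u < v -> pw p u < pw p v.
Proof.
  intros Hp [Hu Huv]. rewrite (pw_pos p v) by lra.
  destruct Hu as [Hu|Hu].
  - rewrite pw_pos by lra. apply Rlt_Rpower_l; lra.
  - subst; rewrite pw_nonpos by lra; apply Rpower_pos.
Qed.

Lemma pw_le_mono p u v : 0 < p -> u <= v -> pw p u <= pw p v.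
Proof.
  intros Hp Huv. destruct (Rle_dec u 0).
  - rewrite pw_nonpos by lra; apply pw_ge0.
  - destruct Huv as [H|H]; [left; apply pw_lt_mono; lra| subst; lra].
Qed.

Lemma pw_le1 p v : 0 < p -> v <= 1 -> pw p v <= 1.
Proof. intros. rewrite <- (pw_1 p). apply pw_le_mono; auto. Qed.

Lemma pw_inv p w : 0 < p -> 0 <= w -> pw p (pw (/p) w) = w.
Proof.
  intros Hp [Hw|Hw].
  - rewrite (pw_pos (/p)) by auto. rewrite pw_pos by apply Rpower_pos.
    rewrite Rpower_mult. replace (/p * p) with 1 by (field; lra). apply Rpower_1; auto.
  - subst. rewrite (pw_nonpos (/p)) by lra. apply pw_nonpos; lra.
Qed.

Lemma pw_inv' p w : 0 < p -> 0 <= w -> pw (/p) (pw p w) = w.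
Proof.
  intros Hp Hw. rewrite <- (Rinv_inv p) at 2. apply pw_inv; auto.
  apply Rinv_0_lt_compat; auto.
Qed.

Lemma continuous_pw_pos p v : 0 < v -> continuous (pw p) v.
Proof.
  intros Hv. apply continuous_ext_loc with (fun x => Rpower x p).
  - assert (H: 0 < v/2) by lra.
    exists (mkposreal _ H). intros y Hy. simpl in Hy. unfold ball in Hy; simpl in Hy.
    unfold AbsRing_ball, abs, minus, plus, opp in Hy; simpl in Hy.
    rewrite pw_pos; auto. apply Rabs_lt_between in Hy. lra.
  - apply continuity_pt_filterlim. apply derivable_continuous_pt.
    exists (p * Rpower v (p-1)). apply derivable_pt_lim_power; auto.
Qed.

Lemma continuous_pw_neg p v : v < 0 -> continuous (pw p) v.
Proof.
  intros Hv. apply continuous_ext_loc with (fun _ => 0).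
  - assert (H: 0 < -v/2) by lra.
    exists (mkposreal _ H). intros y Hy. simpl in Hy. unfold ball in Hy; simpl in Hy.
    unfold AbsRing_ball, abs, minus, plus, opp in Hy; simpl in Hy.
    rewrite pw_nonpos; auto. apply Rabs_lt_between in Hy. lra.
  - apply continuous_const.
Qed.

Lemma continuous_pw_0 p : 0 < p -> continuous (pw p) 0.
Proof.
  intros Hp. apply continuity_pt_filterlim.
  intros eps Heps. exists (Rpower eps (/p)). split; [apply Rpower_pos|].
  intros x [_ Hx]. simpl in *. unfold R_dist in *.
  rewrite (pw_nonpos p 0) by lra. rewrite Rminus_0_r in *.
  destruct (Rle_dec x 0).
  - rewrite pw_nonpos by auto. rewrite Rabs_R0; auto.
  - rewrite pw_pos by lra. rewrite Rabs_pos_eq by (left; apply Rpower_pos).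
    rewrite Rabs_pos_eq in Hx by lra.
    replace eps with (Rpower (Rpower eps (/p)) p).
    + apply Rlt_Rpower_l; lra.
    + rewrite Rpower_mult. replace (/p * p) with 1 by (field; lra). apply Rpower_1; auto.
Qed.

Lemma continuous_pw p v : 0 < p -> continuous (pw p) v.
Proof.
  intros Hp. destruct (Rtotal_order v 0) as [H|[H|H]].
  - apply continuous_pw_neg; auto.
  - subst; apply continuous_pw_0; auto.
  - apply continuous_pw_pos; auto.
Qed.

Lemma is_derive_pw_pos p v : 0 < v -> is_derive (pw p) v (p * Rpower v (p-1)).
Proof.
  intros Hv. apply is_derive_ext_loc with (fun x => Rpower x p).
  - assert (H: 0 < v/2) by lra.
    exists (mkposreal _ H). intros y Hy. simpl in Hy. unfold ball in Hy; simpl in Hy.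
    unfold AbsRing_ball, abs, minus, plus, opp in Hy; simpl in Hy.
    rewrite pw_pos; auto. apply Rabs_lt_between in Hy. lra.
  - apply is_derive_Reals. apply derivable_pt_lim_power; auto.
Qed.

Lemma is_derive_pw_neg p v : v < 0 -> is_derive (pw p) v 0.
Proof.
  intros Hv. apply is_derive_ext_loc with (fun _ => 0).
  - assert (H: 0 < -v/2) by lra.
    exists (mkposreal _ H). intros y Hy. simpl in Hy. unfold ball in Hy; simpl in Hy.
    unfold AbsRing_ball, abs, minus, plus, opp in Hy; simpl in Hy.
    rewrite pw_nonpos; auto. apply Rabs_lt_between in Hy. lra.
  - apply is_derive_Reals, derivable_pt_lim_const.
Qed.

Lemma is_derive_pw_0 p : 1 < p -> is_derive (pw p) 0 0.
Proof.
  intros Hp. apply is_derive_Reals. intros eps Heps.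
  assert (Hq : 0 < Rpower eps (/(p-1))) by apply Rpower_pos.
  exists (mkposreal _ Hq). intros x Hx0 Hx. simpl in Hx.
  rewrite Rplus_0_l, (pw_nonpos p 0) by lra. rewrite Rminus_0_r.
  destruct (Rle_dec x 0).
  - rewrite pw_nonpos by auto. replace ((0 - 0) / x) with 0 by (field; lra). rewrite Rabs_R0; auto.
  - rewrite pw_pos by lra. rewrite Rminus_0_r.
    rewrite Rabs_pos_eq in Hx by lra.
    replace p with (1 + (p-1)) at 1 by ring. rewrite Rpower_plus, Rpower_1 by lra.
    replace (x * Rpower x (p-1) / x) with (Rpower x (p-1)) by (field; lra).
    rewrite Rabs_pos_eq by (left; apply Rpower_pos).
    replace eps with (Rpower (Rpower eps (/(p-1))) (p-1)).
    + apply Rlt_Rpower_l; lra.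
    + rewrite Rpower_mult. replace (/(p-1) * (p-1)) with 1 by (field; lra). apply Rpower_1; auto.
Qed.

Lemma is_derive_pw p v : 1 < p -> is_derive (pw p) v (p * pw (p-1) v).
Proof.
  intros Hp. destruct (Rtotal_order v 0) as [H|[H|H]].
  - rewrite pw_nonpos by lra. rewrite Rmult_0_r. apply is_derive_pw_neg; auto.
  - subst. rewrite pw_nonpos by lra. rewrite Rmult_0_r. apply is_derive_pw_0; auto.
  - rewrite pw_pos by auto. apply is_derive_pw_pos; auto.
Qed.

Lemma pw_mvt p a b : 0 < p -> 0 <= a <= b ->
  exists c, a <= c <= b /\ pw p b - pw p a = p * Rpower c (p-1) * (b - a).
Proof.
  intros Hp Hab. destruct (Req_dec a b) as [E|E].
  - subst. exists b. split; [lra|ring].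
  - destruct (MVT_gen (pw p) a b (fun c => p * Rpower c (p-1))) as [c [Hc Heq]].
    + intros x Hx. rewrite Rmin_left, Rmax_right in Hx by lra. apply is_derive_pw_pos. lra.
    + intros x Hx. apply continuity_pt_filterlim. apply continuous_pw; auto.
    + rewrite Rmin_left, Rmax_right in Hc by lra. exists c; split; auto.
Qed.

Lemma ln_nonpos x : x <= 0 -> ln x = 0.
Proof. intros H; unfold ln; destruct (Rlt_dec 0 x); [exfalso; lra|auto]. Qed.

Lemma exp_le_mono x y : x <= y -> exp x <= exp y.
Proof. intros [H|H]; [left; apply exp_increasing; auto| subst; lra]. Qed.

Lemma Rpower_ge1_neg c e : 0 <= c <= 1 -> e <= 0 -> 1 <= Rpower c e.
Proof.
  intros Hc He. unfold Rpower. rewrite <- exp_0. apply exp_le_mono.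
  destruct (Req_dec c 0) as [E|E].
  - subst. rewrite ln_nonpos by lra. lra.
  - assert (ln c <= 0). { rewrite <- ln_1. apply ln_le; lra. } nra.
Qed.

Lemma Rpower_le_neg a c e : 0 < a <= c -> e <= 0 -> Rpower c e <= Rpower a e.
Proof.
  intros Hc He. unfold Rpower. apply exp_le_mono.
  assert (ln a <= ln c) by (apply ln_le; lra). nra.
Qed.

Lemma Rpower_ge_pos a c e : 0 < a <= c -> 0 <= e -> Rpower a e <= Rpower c e.
Proof.
  intros Hc He. unfold Rpower. apply exp_le_mono.
  assert (ln a <= ln c) by (apply ln_le; lra). nra.
Qed.

Lemma pw_slope_lb p a b : 0 < p < 1 -> 0 <= a <= b -> b <= 1 ->
  p * (b - a) <= pw p b - pw p a.
Proof.
  intros Hp Hab Hb. destruct (pw_mvt p a b) as [c [Hc ->]]; try lra.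
  assert (1 <= Rpower c (p-1)) by (apply Rpower_ge1_neg; lra).
  replace (p * Rpower c (p-1) * (b-a)) with ((p*(b-a)) * Rpower c (p-1)) by ring.
  assert (0<=p*(b-a)) by nra. nra.
Qed.

Lemma pw_lip p a0 a b : 0 < p < 1 -> 0 < a0 <= a -> a <= b ->
  pw p b - pw p a <= p * Rpower a0 (p-1) * (b - a).
Proof.
  intros Hp Hab Hb. destruct (pw_mvt p a b) as [c [Hc ->]]; try lra.
  assert (Rpower c (p-1) <= Rpower a0 (p-1)) by (apply Rpower_le_neg; lra).
  replace (p * Rpower c (p-1) * (b-a)) with ((p*(b-a)) * Rpower c (p-1)) by ring.
  replace (p * Rpower a0 (p-1) * (b-a)) with ((p*(b-a)) * Rpower a0 (p-1)) by ring.
  assert (0<=p*(b-a)) by nra. nra.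
Qed.

Lemma pw_convex p w0 w e : 1 < p -> 0 < w0 <= w -> 0 <= e ->
  p * Rpower w0 (p-1) * e <= pw p (w + e) - pw p w.
Proof.
  intros Hp Hw He. destruct (pw_mvt p w (w+e)) as [c [Hc Heq]]; try lra.
  replace (w + e - w) with e in Heq by ring. rewrite Heq.
  assert (Rpower w0 (p-1) <= Rpower c (p-1)) by (apply Rpower_ge_pos; lra).
  replace (p * Rpower c (p-1) * e) with ((p*e) * Rpower c (p-1)) by ring.
  replace (p * Rpower w0 (p-1) * e) with ((p*e) * Rpower w0 (p-1)) by ring.
  assert (0<=p*e) by nra. nra.
Qed.

Ltac mm := unfold Rmin, Rmax in *; repeat match goal with
  | |- context [Rle_dec ?a ?b] => destruct (Rle_dec a b)
  | H: context [Rle_dec ?a ?b] |- _ => destruct (Rle_dec a b) end.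

Definition clamp d x := Rmax 0 (Rmin x d) / d.

Lemma div_le_1 y d : 0 < d -> y <= d -> y / d <= 1.
Proof. intros Hd H. apply Rmult_le_reg_r with d; auto. unfold Rdiv. rewrite Rmult_assoc, Rinv_l; lra. Qed.

Lemma psi_eq k d x : 0 < k -> 0 < d -> psi k d x = pw k (clamp d x).
Proof.
  intros Hk Hd. unfold psi, clamp.
  destruct (Rlt_dec 0 x).
  - destruct (Rlt_dec x d).
    + replace (Rmax 0 (Rmin x d)) with x by (mm; lra). rewrite pw_pos; auto.
      apply Rdiv_lt_0_compat; lra.
    + replace (Rmax 0 (Rmin x d)) with d by (mm; lra). replace (d/d) with 1 by (field; lra).
      rewrite pw_1; auto.
  - replace (Rmax 0 (Rmin x d)) with 0 by (mm; lra). rewrite pw_nonpos; auto.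
    unfold Rdiv; lra.
Qed.

Lemma clamp_range d x : 0 < d -> 0 <= clamp d x <= 1.
Proof.
  intros Hd. unfold clamp. split.
  - apply Rdiv_le_0_compat; [mm; lra|lra].
  - apply div_le_1; auto. mm; lra.
Qed.

Lemma clamp_mono d x y : 0 < d -> x <= y -> clamp d x <= clamp d y.
Proof.
  intros Hd H. unfold clamp, Rdiv. apply Rmult_le_compat_r.
  - left; apply Rinv_0_lt_compat; auto.
  - mm; lra.
Qed.

Lemma clamp_lip d x y : 0 < d -> Rabs (clamp d x - clamp d y) <= Rabs (x - y) / d.
Proof.
  intros Hd. unfold clamp. replace (Rmax 0 (Rmin x d) / d - Rmax 0 (Rmin y d) / d)
    with ((Rmax 0 (Rmin x d) - Rmax 0 (Rmin y d)) / d) by (field; lra).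
  unfold Rdiv. rewrite Rabs_mult, (Rabs_pos_eq (/d)) by (left; apply Rinv_0_lt_compat; auto).
  apply Rmult_le_compat_r. left; apply Rinv_0_lt_compat; auto.
  apply Rabs_le.
  assert (H1 := Rle_abs (x-y)). assert (H2 := Rle_abs (-(x-y))). rewrite Rabs_Ropp in H2.
  mm; lra.
Qed.

Lemma clamp_inner d x : 0 < d -> 0 <= x <= d -> clamp d x = x / d.
Proof. intros Hd H. unfold clamp. f_equal. mm; lra. Qed.

Lemma continuous_clamp d x : 0 < d -> continuous (clamp d) x.
Proof.
  intros Hd. apply continuity_pt_filterlim. intros eps Heps.
  exists (eps * d). split. apply Rmult_lt_0_compat; auto.
  intros y [_ Hy]. simpl in *. unfold R_dist in *.
  eapply Rle_lt_trans. apply clamp_lip; auto.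
  apply Rmult_lt_reg_r with d; auto. unfold Rdiv. rewrite Rmult_assoc, Rinv_l; lra.
Qed.

Section PsiSec.
Variables k d : R.
Hypothesis Hk : 0 < k.
Hypothesis Hk1 : k < 1.
Hypothesis Hd : 0 < d.

Lemma psi_ge0 x : 0 <= psi k d x.
Proof. rewrite psi_eq; auto. apply pw_ge0. Qed.

Lemma psi_le1 x : psi k d x <= 1.
Proof. rewrite psi_eq; auto. apply pw_le1; auto. apply clamp_range; auto. Qed.

Lemma psi_mono x y : x <= y -> psi k d x <= psi k d y.
Proof. intros H. rewrite !psi_eq; auto. apply pw_le_mono; auto. apply clamp_mono; auto. Qed.

Lemma psi_nonpos x : x <= 0 -> psi k d x = 0.
Proof. intros H. unfold psi. destruct (Rlt_dec 0 x); [exfalso; lra|auto]. Qed.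

Lemma psi_ged x : d <= x -> psi k d x = 1.
Proof. intros H. unfold psi. destruct (Rlt_dec 0 x); [|exfalso; lra].
  destruct (Rlt_dec x d); [exfalso; lra|auto]. Qed.

Lemma continuous_psi x : continuous (psi k d) x.
Proof.
  apply continuous_ext with (fun x => pw k (clamp d x)).
  - intros; rewrite psi_eq; auto.
  - apply continuous_comp. apply continuous_clamp; auto. apply continuous_pw; auto.
Qed.

Lemma psi_unif eps : 0 < eps -> exists eta, 0 < eta /\
  forall x y, Rabs (x - y) < eta -> Rabs (psi k d x - psi k d y) < eps.
Proof.
  intros He.
  assert (Hc : forall x, 0 <= x <= 1 -> continuity_pt (pw k) x).
  { intros x _. apply continuity_pt_filterlim. apply continuous_pw; auto. }
  destruct (Heine (pw k) (fun c => 0 <= c <= 1) (compact_P3 0 1) Hc (mkposreal _ He)) as [eta Heta].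
  exists (eta * d). split. apply Rmult_lt_0_compat; auto; apply cond_pos.
  intros x y Hxy. rewrite !psi_eq; auto. apply Heta; try apply clamp_range; auto.
    eapply Rle_lt_trans. apply clamp_lip; auto.
    apply Rmult_lt_reg_r with d; auto. unfold Rdiv. rewrite Rmult_assoc, Rinv_l; lra.
Qed.

Lemma psi_slope x y : 0 <= x -> x <= y -> y <= d -> k / d * (y - x) <= psi k d y - psi k d x.
Proof.
  intros H1 H2 H3. rewrite !psi_eq; auto. rewrite !clamp_inner by (auto; lra).
  replace (k / d * (y - x)) with (k * (y/d - x/d)) by (field; lra).
  apply pw_slope_lb; try lra.
  - split; [apply Rdiv_le_0_compat; lra|]. unfold Rdiv; apply Rmult_le_compat_r; [left; apply Rinv_0_lt_compat|]; lra.
  - apply div_le_1; lra.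
Qed.

Lemma psi_lip a0 x y : 0 < a0 -> a0 <= x -> x <= y ->
  psi k d y - psi k d x <= k * Rpower (Rmin a0 d / d) (k-1) / d * (y - x).
Proof.
  intros H0 H1 H2. rewrite !psi_eq; auto.
  assert (Ha : 0 < Rmin a0 d / d) by (apply Rdiv_lt_0_compat; mm; lra).
  eapply Rle_trans. apply pw_lip with (a0 := Rmin a0 d / d).
  - lra.
  - split; auto. unfold clamp, Rdiv. apply Rmult_le_compat_r. left; apply Rinv_0_lt_compat; auto. mm; lra.
  - apply clamp_mono; auto.
  - assert (Hc : clamp d y - clamp d x <= (y - x) / d).
    { unfold clamp. replace (Rmax 0 (Rmin y d) / d - Rmax 0 (Rmin x d) / d)
        with ((Rmax 0 (Rmin y d) - Rmax 0 (Rmin x d)) / d) by (field; lra).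
      unfold Rdiv; apply Rmult_le_compat_r. left; apply Rinv_0_lt_compat; auto. mm; lra. }
    assert (0 < k * Rpower (Rmin a0 d / d) (k - 1)) by (apply Rmult_lt_0_compat; auto; apply Rpower_pos).
    replace (k * Rpower (Rmin a0 d / d) (k - 1) / d * (y - x)) with
      (k * Rpower (Rmin a0 d / d) (k - 1) * ((y - x)/d)) by (field; lra).
    apply Rmult_le_compat_l; lra.
Qed.

Definition q w := pw (/k) w.

Lemma q_range w : 0 <= w <= 1 -> 0 <= q w <= 1.
Proof.
  intros H. unfold q. split. apply pw_ge0. apply pw_le1. apply Rinv_0_lt_compat; auto. lra.
Qed.

Lemma psi_q w : 0 <= w <= 1 -> psi k d (d * q w) = w.
Proof.
  intros H. rewrite psi_eq; auto. rewrite clamp_inner.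
  - replace (d * q w / d) with (q w) by (field; lra). unfold q.
    apply pw_inv; auto; lra.
  - auto.
  - assert (H' := q_range w H). split; nra.
Qed.

Lemma q_psi x : 0 <= x <= d -> d * q (psi k d x) = x.
Proof.
  intros H. rewrite psi_eq; auto. rewrite clamp_inner; auto. unfold q.
  rewrite pw_inv'; auto. field; lra. apply Rdiv_le_0_compat; lra.
Qed.

Lemma q_mono u v : u <= v -> q u <= q v.
Proof. intros; unfold q; apply pw_le_mono; auto. apply Rinv_0_lt_compat; auto. Qed.

Lemma q_0 : q 0 = 0.
Proof. unfold q; apply pw_nonpos; lra. Qed.
Lemma q_1 : q 1 = 1.
Proof. unfold q; apply pw_1. Qed.

Definition dq w := / k * pw (/k - 1) w.

Lemma invk_gt1 : 1 < / k.
Proof. rewrite <- Rinv_1. apply Rinv_lt_contravar; lra. Qed.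

Lemma is_derive_q w : is_derive q w (dq w).
Proof. unfold q, dq. apply is_derive_pw. apply invk_gt1. Qed.

Lemma continuous_dq w : continuous dq w.
Proof.
  unfold dq. apply continuity_pt_filterlim. apply continuity_pt_mult.
  apply continuity_pt_const; intros ? ?; reflexivity.
  apply continuity_pt_filterlim. apply continuous_pw.
  assert (H := invk_gt1); lra.
Qed.

Lemma continuous_q w : continuous q w.
Proof. unfold q. apply continuous_pw. apply Rinv_0_lt_compat; auto. Qed.


Variables S l0 : R.
Hypothesis HS : 0 < S.
Hypothesis Hl0 : 0 < l0.

Ltac cst := apply continuity_pt_const; intros ? ?; reflexivity.

Lemma cpt_psi_inner s w : continuity_pt (fun w => psi k d (s + d * q w)) w.
Proof.
  apply (continuity_pt_comp (fun w => s + d * q w) (psi k d)).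
  - apply continuity_pt_plus. cst. apply continuity_pt_mult. cst.
    apply continuity_pt_filterlim, continuous_q.
  - apply continuity_pt_filterlim, continuous_psi.
Qed.

Lemma cpt_den w : 0 <= w -> continuity_pt (fun w => S * w + l0) w /\ S * w + l0 <> 0.
Proof.
  intros Hw. split.
  - apply continuity_pt_plus. apply continuity_pt_mult. cst. apply continuity_pt_id. cst.
  - nra.
Qed.

Definition Gi s w := psi k d (s + d * q w) / (S * w + l0).
Definition G s := RInt (Gi s) 0 1.
Definition c0 := RInt (fun w => 1 / (S * w + l0)) 0 1.

Lemma continuous_Gi s w : 0 <= w -> continuous (Gi s) w.
Proof.
  intros Hw. apply continuity_pt_filterlim. unfold Gi.
  destruct (cpt_den w Hw) as [H1 H2].
  apply continuity_pt_div; auto. apply cpt_psi_inner.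
Qed.

Lemma ex_RInt_Gi s a b : 0 <= a -> 0 <= b -> ex_RInt (Gi s) a b.
Proof.
  intros Ha Hb. apply exRc. intros z Hz. apply continuous_Gi.
  mm; lra.
Qed.

Lemma ex_RInt_c0 : ex_RInt (fun w => 1 / (S * w + l0)) 0 1.
Proof.
  apply exRc. intros z Hz. apply continuity_pt_filterlim.
  destruct (cpt_den z) as [H1 H2]. mm; lra.
  apply continuity_pt_div; auto. cst.
Qed.

Lemma RInt_diff (f g : R -> R) a b : ex_RInt f a b -> ex_RInt g a b ->
  RInt f a b - RInt g a b = RInt (fun x => f x - g x) a b.
Proof. intros H1 H2. exact (eq_sym (RInt_minus f g a b H1 H2)). Qed.

Lemma G_diff s1 s2 : G s2 - G s1 = RInt (fun w => Gi s2 w - Gi s1 w) 0 1.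
Proof. unfold G. apply RInt_diff; apply ex_RInt_Gi; lra. Qed.

Lemma den_pos w : 0 <= w -> 0 < S * w + l0.
Proof. intros; nra. Qed.

Lemma G_mono s1 s2 : s1 <= s2 -> G s1 <= G s2.
Proof.
  intros H. unfold G. apply RInt_le; try lra; try (apply ex_RInt_Gi; lra).
  intros x Hx. unfold Gi, Rdiv. apply Rmult_le_compat_r.
  left; apply Rinv_0_lt_compat, den_pos; lra.
  apply psi_mono; lra.
Qed.

Lemma G_low s : s <= - d -> G s = 0.
Proof.
  intros H. unfold G. rewrite (RInt_ext _ (fun _ => 0)).
  - rewrite RInt_cR. toR; ring.
  - intros x Hx. rewrite Rmin_left, Rmax_right in Hx by lra. unfold Gi.
    rewrite psi_nonpos. toR; unfold Rdiv; ring.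
    assert (H' := q_range x). nra.
Qed.

Lemma G_high s : d <= s -> G s = c0.
Proof.
  intros H. unfold G, c0. apply RInt_ext.
  intros x Hx. rewrite Rmin_left, Rmax_right in Hx by lra. unfold Gi.
  rewrite psi_ged. auto.
  assert (H' := q_range x). nra.
Qed.

Lemma c0_val : c0 = ln (1 + S / l0) / S.
Proof.
  unfold c0. apply is_RInt_unique.
  replace (ln (1 + S / l0) / S) with (minus (ln (S * 1 + l0) / S) (ln (S * 0 + l0) / S)).
  - apply (is_RInt_derive (fun w => ln (S * w + l0) / S)).
    + intros x Hx. rewrite Rmin_left, Rmax_right in Hx by lra.
      auto_derive. nra. field. split; nra.
    + intros x Hx. rewrite Rmin_left, Rmax_right in Hx by lra.
      apply continuity_pt_filterlim. destruct (cpt_den x) as [H1 H2]; try lra.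
      apply continuity_pt_div; auto. cst.
  - unfold minus, plus, opp; simpl.
    replace (S*1+l0) with ((1 + S/l0) * l0) by (field; lra).
    replace (S*0+l0) with l0 by ring.
    rewrite ln_mult. field; lra. assert (0 < S/l0) by (apply Rdiv_lt_0_compat; auto). lra. auto.
Qed.

Lemma G0_id : S * G 0 + l0 * c0 = 1.
Proof.
  unfold G, c0.
  rewrite <- (RInt_scalR (Gi 0)), <- (RInt_scalR (fun w => 1 / (S*w+l0))).
  2: apply ex_RInt_c0. 2: apply ex_RInt_Gi; lra.
  rewrite <- RInt_plusR.
  2: apply ex_RInt_scalR, ex_RInt_Gi; lra. 2: apply ex_RInt_scalR, ex_RInt_c0.
  rewrite (RInt_extR _ (fun _ => 1)).
  - rewrite RInt_cR. ring.
  - intros x Hx. rewrite Rmin_left, Rmax_right in Hx by lra.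
    unfold Gi. rewrite Rplus_0_l, psi_q by lra.
    field. nra.
Qed.

Lemma RInt_lb_sub (f : R -> R) a b c :
  0 <= a <= b -> b <= 1 ->
  (forall x, 0 <= x <= 1 -> continuous f x) ->
  (forall x, 0 < x < 1 -> 0 <= f x) ->
  (forall x, a < x < b -> c <= f x) -> c * (b - a) <= RInt f 0 1.
Proof.
  intros Hab Hb Hc H0 H1.
  assert (E : forall u v, 0 <= u <= v -> v <= 1 -> ex_RInt f u v).
  { intros u v Hu Hv. apply exRc. intros z Hz. apply Hc. mm; lra. }
  rewrite <- (RInt_Chasles f 0 a 1) by (apply E; lra).
  rewrite <- (RInt_Chasles f a b 1) by (apply E; lra).
  change (c * (b - a) <= RInt f 0 a + (RInt f a b + RInt f b 1)).
  assert (0 <= RInt f 0 a) by (apply RInt_ge_0; try lra; [apply E; lra| intros; apply H0; lra]).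
  assert (0 <= RInt f b 1) by (apply RInt_ge_0; try lra; [apply E; lra| intros; apply H0; lra]).
  assert (c * (b - a) <= RInt f a b).
  { assert (RInt (fun _ => c) a b <= RInt f a b).
    { apply RInt_le; try lra. apply ex_RInt_const. apply E; lra. intros; apply H1; lra. }
    rewrite RInt_cR in H3. lra. }
  lra.
Qed.

Lemma continuous_Gi_diff s1 s2 x : 0 <= x -> continuous (fun w => Gi s2 w - Gi s1 w) x.
Proof.
  intros Hx. apply continuity_pt_filterlim. apply continuity_pt_minus;
  apply continuity_pt_filterlim, continuous_Gi; auto.
Qed.

Lemma G_slope A B s1 s2 : 0 <= A -> A < B -> B <= d -> s1 <= s2 -> 0 <= s1 + A -> s2 + B <= d ->
  (pw k (B/d) - pw k (A/d)) * (k/d * (s2-s1) / (S+l0)) <= G s2 - G s1.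
Proof.
  intros HA HAB HB Hs H1 H2. rewrite G_diff.
  assert (HAd : 0 <= A/d) by (apply Rdiv_le_0_compat; lra).
  assert (HBd : A/d < B/d) by (unfold Rdiv; apply Rmult_lt_compat_r; [apply Rinv_0_lt_compat|]; lra).
  assert (HB1 : B/d <= 1) by (apply div_le_1; lra).
  assert (Hw : pw k (A/d) < pw k (B/d)) by (apply pw_lt_mono; lra).
  rewrite Rmult_comm. apply RInt_lb_sub.
  - split; [apply pw_ge0|lra].
  - apply pw_le1; lra.
  - intros; apply continuous_Gi_diff; lra.
  - intros x Hx. unfold Gi. unfold Rdiv. rewrite <- Rmult_minus_distr_r.
    apply Rmult_le_pos. assert (psi k d (s1 + d * q x) <= psi k d (s2 + d * q x)) by (apply psi_mono; lra). lra.
    left; apply Rinv_0_lt_compat, den_pos; lra.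
  - intros x Hx. assert (0 <= pw k (A/d)) by apply pw_ge0.
    assert (pw k (B/d) <= 1) by (apply pw_le1; lra).
    assert (Hq1 : A/d <= q x).
    { unfold q. rewrite <- (pw_inv' k (A/d)) by auto. apply pw_le_mono. apply Rinv_0_lt_compat; auto. lra. }
    assert (Hq2 : q x <= B/d).
    { unfold q. rewrite <- (pw_inv' k (B/d)) by lra. apply pw_le_mono. apply Rinv_0_lt_compat; auto. lra. }
    assert (Hq1' : A <= d * q x). { apply Rmult_le_reg_r with (/d). apply Rinv_0_lt_compat; lra.
      replace (d * q x * /d) with (q x) by (field; lra). exact Hq1. }
    assert (Hq2' : d * q x <= B). { apply Rmult_le_reg_r with (/d). apply Rinv_0_lt_compat; lra.
      replace (d * q x * /d) with (q x) by (field; lra). exact Hq2. }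
    assert (Hsl := psi_slope (s1 + d * q x) (s2 + d * q x) ltac:(lra) ltac:(lra) ltac:(lra)).
    replace (s2 + d * q x - (s1 + d * q x)) with (s2 - s1) in Hsl by ring.
    unfold Gi. replace (psi k d (s2 + d * q x) / (S * x + l0) - psi k d (s1 + d * q x) / (S * x + l0))
      with ((psi k d (s2 + d * q x) - psi k d (s1 + d * q x)) / (S * x + l0)) by (field; apply Rgt_not_eq, den_pos; lra).
    assert (Hk0 : 0 <= k / d * (s2 - s1)) by (apply Rmult_le_pos; [left; apply Rdiv_lt_0_compat|]; lra).
    apply Rle_trans with ((k / d * (s2 - s1)) / (S * x + l0)).
    + unfold Rdiv at 2 3. apply Rmult_le_compat_l; auto. apply Rinv_le_contravar. apply den_pos; lra. nra.
    + unfold Rdiv; apply Rmult_le_compat_r; [left; apply Rinv_0_lt_compat, den_pos; lra| lra].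
Qed.

Lemma G0_pos : 0 < G 0.
Proof.
  assert (H := G_slope (3*d/4) d (-(3*d/4)) (-(d/4)) ltac:(lra) ltac:(lra) ltac:(lra) ltac:(lra) ltac:(lra) ltac:(lra)).
  assert (H1 : pw k (3*d/4/d) < pw k (d/d)).
  { apply pw_lt_mono; auto. split. apply Rdiv_le_0_compat; lra.
    unfold Rdiv; apply Rmult_lt_compat_r; [apply Rinv_0_lt_compat|]; lra. }
  assert (H2 : 0 < k / d * (- (d / 4) - - (3 * d / 4)) / (S + l0)).
  { apply Rdiv_lt_0_compat; [|lra]. apply Rmult_lt_0_compat; [apply Rdiv_lt_0_compat|]; lra. }
  assert (H3 : 0 < (pw k (d / d) - pw k (3 * d / 4 / d)) * (k / d * (- (d / 4) - - (3 * d / 4)) / (S + l0))) by (apply Rmult_lt_0_compat; lra).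
  assert (G (-d) <= G (-(3*d/4))) by (apply G_mono; lra).
  assert (G (-(d/4)) <= G 0) by (apply G_mono; lra).
  rewrite G_low in * by lra. lra.
Qed.

Definition Lp a := k * Rpower (Rmin a d / d) (k-1) / d.

Lemma Lp_pos a : 0 < a -> 0 < Lp a.
Proof.
  intros Ha. unfold Lp. apply Rdiv_lt_0_compat; auto. apply Rmult_lt_0_compat; auto. apply Rpower_pos.
Qed.

Lemma G_lip_pos a s1 s2 : 0 < a -> a <= s1 -> s1 <= s2 -> G s2 - G s1 <= Lp a * (s2 - s1) / l0.
Proof.
  intros Ha H1 H2. rewrite G_diff.
  assert (RInt (fun w => Gi s2 w - Gi s1 w) 0 1 <= RInt (fun _ => Lp a * (s2 - s1) / l0) 0 1).
  { apply RInt_le; try lra. apply exRc; intros; apply continuous_Gi_diff; mm; lra.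
    apply ex_RInt_const.
    intros x Hx. assert (Hq := q_range x ltac:(lra)).
    assert (Hl := psi_lip a (s1 + d * q x) (s2 + d * q x) Ha ltac:(nra) ltac:(lra)).
    fold (Lp a) in Hl. replace (s2 + d * q x - (s1 + d * q x)) with (s2 - s1) in Hl by ring.
    assert (Hm : psi k d (s1 + d * q x) <= psi k d (s2 + d * q x)) by (apply psi_mono; lra).
    unfold Gi. replace (psi k d (s2 + d * q x) / (S * x + l0) - psi k d (s1 + d * q x) / (S * x + l0))
      with ((psi k d (s2 + d * q x) - psi k d (s1 + d * q x)) / (S * x + l0)) by (field; apply Rgt_not_eq, den_pos; lra).
    apply Rle_trans with ((psi k d (s2 + d * q x) - psi k d (s1 + d * q x)) / l0).
    - unfold Rdiv. apply Rmult_le_compat_l. lra. apply Rinv_le_contravar; auto. nra.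
    - unfold Rdiv; apply Rmult_le_compat_r; [left; apply Rinv_0_lt_compat|]; lra. }
  rewrite RInt_cR in H. lra.
Qed.

Definition Qm a := / k * Rpower (pw k (a / d)) (/ k - 1).

Lemma Qm_pos a : 0 < Qm a.
Proof. unfold Qm. apply Rmult_lt_0_compat. apply Rinv_0_lt_compat; auto. apply Rpower_pos. Qed.

Lemma G_lip_neg a s1 s2 : 0 < a < d -> s1 <= s2 -> s2 <= - a ->
  G s2 - G s1 <= (s2 - s1) / (d * Qm a * l0).
Proof.
  intros Ha H1 H2. rewrite G_diff.
  set (wl := pw k (a/d)).
  assert (Had : 0 < a / d < 1).
  { split. apply Rdiv_lt_0_compat; lra. apply Rmult_lt_reg_r with d; auto. unfold Rdiv. rewrite Rmult_assoc, Rinv_l; lra. }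
  assert (Hwl : 0 < wl) by (unfold wl; rewrite pw_pos by lra; apply Rpower_pos).
  assert (Hqwl : q wl = a / d) by (unfold q, wl; apply pw_inv'; lra).
  assert (HQ := Qm_pos a).
  set (e := (s2 - s1) / (d * Qm a)).
  assert (He : 0 <= e) by (unfold e; apply Rdiv_le_0_compat; [lra| apply Rmult_lt_0_compat; lra]).
  set (phi := fun w => psi k d (s1 + d * q w)).
  assert (Hcphi : forall x, continuous phi x) by (intros; apply continuity_pt_filterlim, cpt_psi_inner).
  assert (Ephi : forall u v, ex_RInt phi u v) by (intros; apply exRc; intros; apply Hcphi).
  assert (Hb : RInt (fun w => Gi s2 w - Gi s1 w) 0 1 <= RInt (fun w => (phi (w + e) - phi w) / l0) 0 1).
  { apply RInt_le; try lra. apply exRc; intros; apply continuous_Gi_diff; mm; lra.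
    apply exRc. intros z _. apply continuity_pt_filterlim. apply continuity_pt_div; [|cst|lra].
    apply continuity_pt_minus; [|apply continuity_pt_filterlim; apply Hcphi].
    apply (continuity_pt_comp (fun w => w + e) phi). apply continuity_pt_plus. apply continuity_pt_id. cst.
    apply continuity_pt_filterlim; apply Hcphi.
    intros x Hx.
    assert (Hm0 : phi x <= phi (x + e)) by (unfold phi; apply psi_mono; assert (q x <= q (x+e)) by (apply q_mono; lra); nra).
    unfold Gi. replace (psi k d (s2 + d * q x) / (S * x + l0) - psi k d (s1 + d * q x) / (S * x + l0))
      with ((psi k d (s2 + d * q x) - phi x) / (S * x + l0)) by (unfold phi; field; apply Rgt_not_eq, den_pos; lra).
    destruct (Rle_dec x wl) as [Hxw|Hxw].
    - assert (q x <= a / d) by (rewrite <- Hqwl; apply q_mono; auto).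
      assert (d * q x <= a) by (apply Rmult_le_reg_r with (/d); [apply Rinv_0_lt_compat; lra|];
        replace (d * q x * /d) with (q x) by (field; lra); replace (a * / d) with (a/d) by reflexivity; lra).
      rewrite psi_nonpos by lra. unfold phi at 1. rewrite psi_nonpos by lra.
      replace ((0 - 0) / (S * x + l0)) with 0 by (field; apply Rgt_not_eq, den_pos; lra).
      apply Rdiv_le_0_compat; lra.
    - assert (Hcv := pw_convex (/k) wl x e invk_gt1 ltac:(lra) He).
      fold (q (x + e)) (q x) in Hcv.
      assert (Hde : d * Qm a * e = s2 - s1) by (unfold e; field; split; lra).
      assert (Hkey : s2 + d * q x <= s1 + d * q (x + e)).
      { unfold Qm in Hde. fold wl in Hde. nra. }
      assert (Hm1 : psi k d (s2 + d * q x) <= phi (x + e)) by (unfold phi; apply psi_mono; lra).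
      assert (Hm2 : phi x <= psi k d (s2 + d * q x)) by (unfold phi; apply psi_mono; assert (0 <= q x) by (unfold q; apply pw_ge0); lra).
      apply Rle_trans with ((psi k d (s2 + d * q x) - phi x) / l0).
      + unfold Rdiv. apply Rmult_le_compat_l. lra. apply Rinv_le_contravar; auto. nra.
      + unfold Rdiv; apply Rmult_le_compat_r; [left; apply Rinv_0_lt_compat|]; lra. }
  assert (Hsh : RInt (fun w => (phi (w + e) - phi w) / l0) 0 1 =
                (RInt phi 1 (1 + e) - RInt phi 0 e) / l0).
  { assert (Esh : ex_RInt (fun w => phi (w+e)) 0 1).
    { apply exRc. intros z _. apply continuity_pt_filterlim.
      apply (continuity_pt_comp (fun w => w + e) phi). apply continuity_pt_plus. apply continuity_pt_id. cst.
      apply continuity_pt_filterlim; apply Hcphi. }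
    rewrite (RInt_extR _ (fun w => / l0 * (phi (w + e) - phi w))) by (intros; unfold Rdiv; ring).
    rewrite RInt_scalR. rewrite RInt_minusR.
    assert (Hcl : RInt (fun w => phi (w + e)) 0 1 = RInt phi e (1 + e)).
    { assert (Hl := RInt_comp_lin phi 1 e 0 1 (Ephi _ _)).
      replace (1 * 0 + e) with e in Hl by ring. replace (1 * 1 + e) with (1 + e) in Hl by ring.
      rewrite <- Hl. apply RInt_extR. intros x _. change (phi (x+e) = 1 * phi (1*x+e)).
      replace (1*x+e) with (x+e) by ring. ring. }
    rewrite Hcl.
    assert (C1 := RInt_Chasles phi e 1 (1+e) (Ephi _ _) (Ephi _ _)).
    assert (C2 := RInt_Chasles phi 0 e 1 (Ephi _ _) (Ephi _ _)).
    change (RInt phi e 1 + RInt phi 1 (1+e) = RInt phi e (1+e)) in C1.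
    change (RInt phi 0 e + RInt phi e 1 = RInt phi 0 1) in C2.
    rewrite <- C1, <- C2. toR. generalize (RInt phi e 1) (RInt phi 1 (1+e)) (RInt phi 0 e). intros r1 r2 r3. field. apply Rgt_not_eq; exact Hl0.
    exact Esh. apply Ephi. apply ex_RInt_minusR. exact Esh. apply Ephi. }
  assert (Hu : RInt phi 1 (1 + e) <= e).
  { assert (RInt phi 1 (1 + e) <= RInt (fun _ => 1) 1 (1 + e)).
    { apply RInt_le. lra. apply Ephi. apply ex_RInt_const. intros; unfold phi; apply psi_le1. }
    rewrite RInt_cR in H. lra. }
  assert (Hl : 0 <= RInt phi 0 e) by (apply RInt_ge_0; [lra|apply Ephi|intros; unfold phi; apply psi_ge0]).
  assert (Hfin : (RInt phi 1 (1 + e) - RInt phi 0 e) / l0 <= e / l0)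
    by (unfold Rdiv; apply Rmult_le_compat_r; [left; apply Rinv_0_lt_compat|]; lra).
  replace ((s2 - s1) / (d * Qm a * l0)) with (e / l0) by (unfold e; field; split; lra).
  lra.
Qed.

Lemma G_cont : continuity G.
Proof.
  intros s eps Heps.
  destruct (psi_unif (eps * l0 / 2)) as [eta [Heta H]].
  { apply Rdiv_lt_0_compat; [apply Rmult_lt_0_compat|]; lra. }
  exists eta. split; auto. intros x [_ Hx]. simpl in *. unfold R_dist in *.
  rewrite G_diff.
  eapply Rle_lt_trans.
  apply (abs_RInt_le_const _ 0 1 (eps / 2)). lra.
  apply exRc; intros; apply continuous_Gi_diff; mm; lra.
  2: lra.
  intros t Ht. unfold Gi.
  replace (psi k d (x + d * q t) / (S * t + l0) - psi k d (s + d * q t) / (S * t + l0))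
    with ((psi k d (x + d * q t) - psi k d (s + d * q t)) / (S * t + l0)) by (field; apply Rgt_not_eq, den_pos; lra).
  unfold Rdiv. rewrite Rabs_mult. rewrite (Rabs_pos_eq (/ _)) by (left; apply Rinv_0_lt_compat, den_pos; lra).
  assert (H1 : Rabs (psi k d (x + d * q t) - psi k d (s + d * q t)) < eps * l0 / 2).
  { apply H. replace (x + d * q t - (s + d * q t)) with (x - s) by ring. auto. }
  assert (H2 : / (S * t + l0) <= / l0) by (apply Rinv_le_contravar; auto; nra).
  assert (H3 : 0 < / (S * t + l0)) by (apply Rinv_0_lt_compat, den_pos; lra).
  apply Rle_trans with (eps * l0 / 2 * / l0).
  - apply Rmult_le_compat; try lra. apply Rabs_pos.
  - right; field; lra.
Qed.

Lemma dmult (f g : R -> R) x df dg : is_derive f x df -> is_derive g x dg ->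
  is_derive (fun y => f y * g y) x (df * g x + f x * dg).
Proof. intros H1 H2. exact (is_derive_mult f g x df dg H1 H2 Rmult_comm). Qed.

Lemma dcomp (f g : R -> R) x df dg : is_derive f (g x) df -> is_derive g x dg ->
  is_derive (fun y => f (g y)) x (dg * df).
Proof. intros H1 H2. exact (is_derive_comp f g x df dg H1 H2). Qed.

Lemma dplus (f g : R -> R) x df dg : is_derive f x df -> is_derive g x dg ->
  is_derive (fun y => f y + g y) x (df + dg).
Proof. intros H1 H2. exact (is_derive_plus f g x df dg H1 H2). Qed.

Lemma dconst (c x : R) : is_derive (fun _ => c) x 0.
Proof. apply is_derive_Reals, derivable_pt_lim_const. Qed.

Lemma did (x : R) : is_derive (fun y => y) x 1.
Proof. apply is_derive_Reals, derivable_pt_lim_id. Qed.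

Lemma is_derive_RInt_R (f : R -> R) a x : (forall y, continuous f y) ->
  is_derive (fun b => RInt f a b) x (f x).
Proof.
  intros Hc. apply (is_derive_RInt f (fun b => RInt f a b) a x).
  - exists (mkposreal 1 Rlt_0_1). intros y _. apply (@RInt_correct R_CompleteNormedModule). apply exRc. intros; apply Hc.
  - apply Hc.
Qed.

Variables h th0 tau : R.
Hypothesis Hh : 0 < S + h.

Definition la th t := lam S l0 k d th t.
Definition ls t := lam_star S h l0 k d th0 t.

Lemma la_ge th t : l0 <= la th t.
Proof. unfold la, lam. assert (H := psi_ge0 (t - th)). nra. Qed.
Lemma ls_ge t : l0 <= ls t.
Proof. unfold ls, lam_star. assert (H := psi_ge0 (t - th0)). nra. Qed.

Lemma continuous_ls t : continuous ls t.
Proof.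
  unfold ls, lam_star. apply continuity_pt_filterlim. apply continuity_pt_plus; [|cst].
  apply continuity_pt_mult; [cst|].
  apply (continuity_pt_comp (fun t => t - th0) (psi k d)).
  apply continuity_pt_minus. apply continuity_pt_id. cst.
  apply continuity_pt_filterlim, continuous_psi.
Qed.

Lemma continuous_la th t : continuous (la th) t.
Proof.
  unfold la, lam. apply continuity_pt_filterlim. apply continuity_pt_plus; [|cst].
  apply continuity_pt_mult; [cst|].
  apply (continuity_pt_comp (fun t => t - th) (psi k d)).
  apply continuity_pt_minus. apply continuity_pt_id. cst.
  apply continuity_pt_filterlim, continuous_psi.
Qed.

Lemma cpt_ln_comp (f : R -> R) x : continuity_pt f x -> 0 < f x -> continuity_pt (fun y => ln (f y)) x.
Proof.
  intros H1 H2. apply (continuity_pt_comp f ln); auto.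
  apply continuity_pt_filterlim, continuous_ln; auto.
Qed.

Definition Jint th t := la th t - ls t - ls t * ln (la th t) + ls t * ln (ls t).

Lemma continuous_Jint th t : continuous (Jint th) t.
Proof.
  unfold Jint. apply continuity_pt_filterlim.
  assert (A1 := continuity_pt_filterlim (la th) t). assert (A2 := continuity_pt_filterlim ls t).
  assert (B1 : continuity_pt (la th) t) by (apply A1, continuous_la).
  assert (B2 : continuity_pt ls t) by (apply A2, continuous_ls).
  assert (P1 := la_ge th t). assert (P2 := ls_ge t).
  apply continuity_pt_plus; [apply continuity_pt_minus; [apply continuity_pt_minus|]|]; auto;
  apply continuity_pt_mult; auto; apply cpt_ln_comp; auto; lra.
Qed.

Lemma Jint_eq th t :
  (let r := lam S l0 k d th t / lam_star S h l0 k d th0 t in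
   (r - 1 - ln r) * lam_star S h l0 k d th0 t) = Jint th t.
Proof.
  unfold Jint. fold (la th t) (ls t). simpl.
  assert (P1 := la_ge th t). assert (P2 := ls_ge t).
  rewrite ln_div by lra. field. lra.
Qed.

Definition Lam x := RInt ls 0 x.
Definition Psi x := RInt (psi k d) 0 x.
Definition I0 th := RInt (fun w => Lam (th + d * q w) * (S / (S * w + l0))) 0 1.
Definition C1 := l0 * tau - Lam tau - ln (S + l0) * Lam tau + RInt (fun t => ls t * ln (ls t)) 0 tau.

Lemma is_derive_Lam x : is_derive Lam x (ls x).
Proof. apply is_derive_RInt_R. apply continuous_ls. Qed.
Lemma is_derive_Psi x : is_derive Psi x (psi k d x).
Proof. apply is_derive_RInt_R. apply continuous_psi. Qed.

Lemma exR_ls a b : ex_RInt ls a b.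
Proof. apply exRc; intros; apply continuous_ls. Qed.

Definition mK th t := ls t * ln (la th t).

Lemma continuous_mK th t : continuous (mK th) t.
Proof.
  unfold mK. apply continuity_pt_filterlim.
  assert (B1 : continuity_pt (la th) t) by (apply continuity_pt_filterlim, continuous_la).
  assert (B2 : continuity_pt ls t) by (apply continuity_pt_filterlim, continuous_ls).
  assert (P1 := la_ge th t).
  apply continuity_pt_mult; auto. apply cpt_ln_comp; auto; lra.
Qed.

Lemma exR_mK th a b : ex_RInt (mK th) a b.
Proof. apply exRc; intros; apply continuous_mK. Qed.

Lemma K1 th : 0 <= th -> RInt (mK th) 0 th = ln l0 * Lam th.
Proof.
  intros Hth. unfold Lam. rewrite <- RInt_scalR by apply exR_ls. apply RInt_extR.
  intros x Hx. unfold mK, la, lam. rewrite psi_nonpos. toR. rewrite Rmult_0_r, Rplus_0_l. ring.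
  mm; lra.
Qed.

Lemma K3 th : th + d <= tau -> RInt (mK th) (th + d) tau = ln (S + l0) * (Lam tau - Lam (th + d)).
Proof.
  intros H. unfold Lam.
  assert (E := RInt_Chasles ls 0 (th + d) tau (exR_ls _ _) (exR_ls _ _)).
  change (RInt ls 0 (th + d) + RInt ls (th + d) tau = RInt ls 0 tau) in E.
  replace (RInt ls 0 tau - RInt ls 0 (th + d)) with (RInt ls (th + d) tau) by lra.
  rewrite <- RInt_scalR by apply exR_ls. apply RInt_extR.
  intros x Hx. unfold mK, la, lam. rewrite psi_ged. toR. replace (S * 1 + l0) with (S + l0) by ring. ring.
  mm; lra.
Qed.

Definition Phi th w := Lam (th + d * q w) * ln (S * w + l0).
Definition dPhi th w := (d * dq w * ls (th + d * q w)) * ln (S * w + l0) + Lam (th + d * q w) * (S / (S * w + l0)).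

Lemma is_derive_inner th w : is_derive (fun w => th + d * q w) w (d * dq w).
Proof.
  replace (d * dq w) with (0 + d * dq w) by ring. apply dplus. apply dconst.
  apply is_derive_scal. apply is_derive_q.
Qed.

Lemma is_derive_Phi th w : 0 <= w -> is_derive (Phi th) w (dPhi th w).
Proof.
  intros Hw. unfold Phi, dPhi. apply (dmult (fun y => Lam (th + d * q y)) (fun y => ln (S * y + l0))).
  - apply (dcomp Lam (fun w => th + d * q w)). apply is_derive_Lam. apply is_derive_inner.
  - assert (0 < S * w + l0) by (apply den_pos; auto).
    replace (S / (S * w + l0)) with (S * / (S * w + l0)) by (unfold Rdiv; ring).
    apply (dcomp ln (fun w => S * w + l0)). apply is_derive_ln; auto.
    replace S with (S * 1 + 0) at 1 by ring. apply dplus. apply is_derive_scal. apply did. apply dconst.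
Qed.

Lemma cpt_inner th w : continuity_pt (fun w => th + d * q w) w.
Proof.
  apply continuity_pt_plus. cst. apply continuity_pt_mult. cst. apply continuity_pt_filterlim, continuous_q.
Qed.

Lemma cpt_Lam x : continuity_pt Lam x.
Proof. apply continuity_pt_filterlim. apply (ex_derive_continuous Lam). exists (ls x); apply is_derive_Lam. Qed.

Lemma continuous_dPhi th w : 0 <= w -> continuous (dPhi th) w.
Proof.
  intros Hw. apply continuity_pt_filterlim. unfold dPhi.
  destruct (cpt_den w Hw) as [D1 D2].
  apply continuity_pt_plus; apply continuity_pt_mult.
  - apply continuity_pt_mult. apply continuity_pt_mult. cst. apply continuity_pt_filterlim, continuous_dq.
    apply (continuity_pt_comp (fun w => th + d * q w) ls). apply cpt_inner. apply continuity_pt_filterlim, continuous_ls.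
  - apply cpt_ln_comp; auto. apply den_pos; auto.
  - apply (continuity_pt_comp (fun w => th + d * q w) Lam). apply cpt_inner. apply cpt_Lam.
  - apply continuity_pt_div; auto. cst.
Qed.

Lemma K2 th : RInt (mK th) th (th + d) = Lam (th + d) * ln (S + l0) - Lam th * ln l0 - I0 th.
Proof.
  assert (Hc := is_RInt_comp (mK th) (fun w => th + d * q w) (fun w => d * dq w) 0 1).
  cbv beta in Hc. rewrite q_0, q_1 in Hc. replace (th + d * 0) with th in Hc by ring. replace (th + d * 1) with (th + d) in Hc by ring.
  assert (Hc' : is_RInt (fun y => scal (d * dq y) (mK th (th + d * q y))) 0 1 (RInt (mK th) th (th + d))).
  { apply Hc. intros; apply continuous_mK.
    intros x _. split. apply is_derive_inner. apply continuity_pt_filterlim.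
    apply continuity_pt_mult. cst. apply continuity_pt_filterlim, continuous_dq. }
  apply is_RInt_uniqueR in Hc'. rewrite <- Hc'.
  assert (HI := is_RInt_derive (Phi th) (dPhi th) 0 1).
  assert (HI' : is_RInt (dPhi th) 0 1 (minus (Phi th 1) (Phi th 0))).
  { apply HI; intros x Hx; rewrite Rmin_left, Rmax_right in Hx by lra.
    apply is_derive_Phi; lra. apply continuous_dPhi; lra. }
  apply is_RInt_uniqueR in HI'.
  assert (E1 : RInt (dPhi th) 0 1 = RInt (fun y => scal (d * dq y) (mK th (th + d * q y))) 0 1 + I0 th).
  { unfold I0. rewrite <- RInt_plusR.
    - apply RInt_extR. intros x Hx. rewrite Rmin_left, Rmax_right in Hx by lra.
      unfold dPhi, mK, la, lam. change (scal (d * dq x) ?z) with ((d * dq x) * z).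
      replace (th + d * q x - th) with (d * q x) by ring. rewrite psi_q by lra. ring.
    - apply exRc. intros z Hz. rewrite Rmin_left, Rmax_right in Hz by lra.
      apply continuity_pt_filterlim. change (fun y => scal (d * dq y) (mK th (th + d * q y))) with
        (fun y => (d * dq y) * (mK th (th + d * q y))).
      apply continuity_pt_mult. apply continuity_pt_mult. cst. apply continuity_pt_filterlim, continuous_dq.
      apply (continuity_pt_comp (fun w => th + d * q w) (mK th)). apply cpt_inner. apply continuity_pt_filterlim, continuous_mK.
    - apply exRc. intros z Hz. rewrite Rmin_left, Rmax_right in Hz by lra.
      apply continuity_pt_filterlim. destruct (cpt_den z) as [D1 D2]. lra.
      apply continuity_pt_mult. apply (continuity_pt_comp (fun w => th + d * q w) Lam). apply cpt_inner. apply cpt_Lam.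
      apply continuity_pt_div; auto. cst. }
  assert (E2 : minus (Phi th 1) (Phi th 0) = Lam (th + d) * ln (S + l0) - Lam th * ln l0).
  { unfold Phi. rewrite q_0, q_1. replace (th + d * 0) with th by ring. replace (th + d * 1) with (th + d) by ring.
    replace (S * 1 + l0) with (S + l0) by ring. replace (S * 0 + l0) with l0 by ring. reflexivity. }
  rewrite HI', E2 in E1. lra.
Qed.

Lemma K_val th : 0 <= th -> th + d <= tau -> RInt (mK th) 0 tau = ln (S + l0) * Lam tau - I0 th.
Proof.
  intros H1 H2.
  assert (E1 := RInt_Chasles (mK th) 0 th (th + d) (exR_mK _ _ _) (exR_mK _ _ _)).
  assert (E2 := RInt_Chasles (mK th) 0 (th + d) tau (exR_mK _ _ _) (exR_mK _ _ _)).
  change (RInt (mK th) 0 th + RInt (mK th) th (th + d) = RInt (mK th) 0 (th + d)) in E1.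
  change (RInt (mK th) 0 (th + d) + RInt (mK th) (th + d) tau = RInt (mK th) 0 tau) in E2.
  rewrite K1, K2 in E1 by auto. rewrite K3 in E2 by auto. lra.
Qed.

Lemma la_int th : RInt (la th) 0 tau = l0 * tau + S * (Psi (tau - th) - Psi (- th)).
Proof.
  assert (Epsi : forall a b, ex_RInt (psi k d) a b) by (intros; apply exRc; intros; apply continuous_psi).
  assert (Es : ex_RInt (fun t => psi k d (t - th)) 0 tau).
  { apply exRc. intros. apply continuity_pt_filterlim.
    apply (continuity_pt_comp (fun t => t - th) (psi k d)).
    apply continuity_pt_minus. apply continuity_pt_id. cst. apply continuity_pt_filterlim, continuous_psi. }
  unfold la, lam.
  rewrite RInt_plusR. 2: apply ex_RInt_scalR; auto. 2: apply ex_RInt_const.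
  rewrite RInt_scalR by auto. rewrite RInt_cR.
  assert (Hl := RInt_comp_lin (psi k d) 1 (- th) 0 tau (Epsi _ _)).
  replace (1 * 0 + - th) with (- th) in Hl by ring. replace (1 * tau + - th) with (tau - th) in Hl by ring.
  assert (E : RInt (fun t => psi k d (t - th)) 0 tau = RInt (psi k d) (- th) (tau - th)).
  { rewrite <- Hl. apply RInt_extR. intros x _. change (psi k d (x - th) = 1 * psi k d (1 * x + - th)).
    replace (1 * x + - th) with (x - th) by ring. ring. }
  rewrite E. unfold Psi.
  assert (C := RInt_Chasles (psi k d) 0 (- th) (tau - th) (Epsi _ _) (Epsi _ _)).
  change (RInt (psi k d) 0 (- th) + RInt (psi k d) (- th) (tau - th) = RInt (psi k d) 0 (tau - th)) in C.
  rewrite <- C. toR; ring.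
Qed.

Lemma J_eq th : 0 <= th -> th + d <= tau -> 0 <= th0 <= tau ->
  J_KL S h l0 k d tau th0 th = C1 + S * (Psi (tau - th) - Psi (- th)) + I0 th.
Proof.
  intros H1 H2 H3. unfold J_KL.
  rewrite (RInt_extR _ (Jint th)) by (intros; apply Jint_eq).
  set (m := Rmin th th0).
  assert (Hm : 0 <= m <= tau) by (unfold m; mm; lra).
  assert (EJ : forall a b, ex_RInt (Jint th) a b) by (intros; apply exRc; intros; apply continuous_Jint).
  assert (Z : RInt (Jint th) 0 m = 0).
  { rewrite (RInt_extR _ (fun _ => 0)). rewrite RInt_cR. toR; ring.
    intros x Hx. rewrite Rmin_left, Rmax_right in Hx by lra.
    unfold Jint, la, ls, lam, lam_star. rewrite !psi_nonpos by (unfold m in Hx; mm; lra). rewrite !Rmult_0_r, !Rplus_0_l. toR; ring. }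
  assert (C := RInt_Chasles (Jint th) 0 m tau (EJ _ _) (EJ _ _)).
  change (RInt (Jint th) 0 m + RInt (Jint th) m tau = RInt (Jint th) 0 tau) in C.
  assert (E : RInt (Jint th) m tau = RInt (Jint th) 0 tau) by lra. rewrite E.
  assert (El : forall a b, ex_RInt (la th) a b) by (intros; apply exRc; intros; apply continuous_la).
  assert (Ell : ex_RInt (fun t => ls t * ln (ls t)) 0 tau).
  { apply exRc. intros. apply continuity_pt_filterlim. apply continuity_pt_mult.
    apply continuity_pt_filterlim, continuous_ls. apply cpt_ln_comp.
    apply continuity_pt_filterlim, continuous_ls. assert (P := ls_ge z); lra. }
  rewrite (RInt_extR (Jint th) (fun t => la th t - ls t - mK th t + ls t * ln (ls t))) by (intros; unfold Jint, mK; reflexivity).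
  assert (Ed1 : ex_RInt (fun t => la th t - ls t) 0 tau) by (apply ex_RInt_minusR; [apply El|apply exR_ls]).
  assert (Ed2 : ex_RInt (fun t => (fun t => la th t - ls t) t - mK th t) 0 tau) by (apply ex_RInt_minusR; [exact Ed1|apply exR_mK]).
  rewrite (RInt_plusR _ _ _ _ Ed2 Ell).
  rewrite (RInt_minusR _ _ _ _ Ed1 (exR_mK _ _ _)).
  rewrite (RInt_minusR _ _ _ _ (El _ _) (exR_ls _ _)).
  rewrite K_val by lra. rewrite la_int. unfold C1, Lam. toR; ring.
Qed.

Definition fI u t := Lam (u + d * q t) * (S / (S * t + l0)).

Lemma is_derive_fI u t : is_derive (fun z => fI z t) u (ls (u + d * q t) * (S / (S * t + l0))).
Proof.
  unfold fI.
  replace (ls (u + d * q t) * (S / (S * t + l0))) with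
    ((1 * ls (u + d * q t)) * (S / (S * t + l0)) + Lam (u + d * q t) * 0) by ring.
  apply (dmult (fun z => Lam (z + d * q t)) (fun _ => S / (S * t + l0))). apply (dcomp Lam (fun z => z + d * q t)). apply is_derive_Lam.
  replace 1 with (1 + 0) by ring. apply dplus. apply did. apply dconst. apply dconst.
Qed.

Lemma Derive_fI u t : Derive (fun z => fI z t) u = ls (u + d * q t) * (S / (S * t + l0)).
Proof. apply is_derive_unique, is_derive_fI. Qed.

Lemma c2d_id2_comp (f : R -> R) x y : continuity_pt f y -> continuity_2d_pt (fun _ v => f v) x y.
Proof. intros H. apply (continuity_1d_2d_pt_comp f (fun _ v => v)); auto. apply continuity_2d_pt_id2. Qed.

Lemma is_derive_I0 th : is_derive I0 th (RInt (fun w => ls (th + d * q w) * (S / (S * w + l0))) 0 1).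
Proof.
  assert (H := is_derive_RInt_param fI 0 1 th).
  unfold I0. fold (fI th). change (fun w => Lam (th + d * q w) * (S / (S * w + l0))) with (fI th).
  replace (RInt (fun w => ls (th + d * q w) * (S / (S * w + l0))) 0 1) with
    (RInt (fun t => Derive (fun u => fI u t) th) 0 1).
  2: { apply RInt_extR; intros; apply Derive_fI. }
  apply (is_derive_ext (fun x0 => RInt (fun t => fI x0 t) 0 1)). { intros; reflexivity. }
  apply H.
  - exists (mkposreal 1 Rlt_0_1). intros y _ t _. exists (ls (y + d * q t) * (S / (S * t + l0))). apply is_derive_fI.
  - intros t Ht. rewrite Rmin_left, Rmax_right in Ht by lra.
    apply (continuity_2d_pt_ext (fun u v => ls (u + d * q v) * (S / (S * v + l0)))).
    { intros; rewrite Derive_fI; reflexivity. }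
    apply continuity_2d_pt_mult.
    + apply (continuity_1d_2d_pt_comp ls (fun u v => u + d * q v)).
      apply continuity_pt_filterlim, continuous_ls.
      apply continuity_2d_pt_plus. apply continuity_2d_pt_id1.
      apply (c2d_id2_comp (fun v => d * q v)). apply continuity_pt_mult. cst. apply continuity_pt_filterlim, continuous_q.
    + apply (c2d_id2_comp (fun v => S / (S * v + l0))).
      destruct (cpt_den t) as [D1 D2]. lra. apply continuity_pt_div; auto. cst.
  - exists (mkposreal 1 Rlt_0_1). intros y _. apply exRc. intros z Hz. rewrite Rmin_left, Rmax_right in Hz by lra.
    apply continuity_pt_filterlim. unfold fI. destruct (cpt_den z) as [D1 D2]. lra.
    apply continuity_pt_mult. apply (continuity_pt_comp (fun w => y + d * q w) Lam). apply cpt_inner. apply cpt_Lam.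
    apply continuity_pt_div; auto. cst.
Qed.

Lemma I0d_G th : RInt (fun w => ls (th + d * q w) * (S / (S * w + l0))) 0 1 = S * ((S + h) * G (th - th0) + l0 * c0).
Proof.
  unfold G, c0.
  rewrite <- (RInt_scalR (Gi (th - th0))) by (apply ex_RInt_Gi; lra).
  rewrite <- (RInt_scalR (fun w => 1 / (S * w + l0))) by apply ex_RInt_c0.
  rewrite <- RInt_plusR. 2: apply ex_RInt_scalR, ex_RInt_Gi; lra. 2: apply ex_RInt_scalR, ex_RInt_c0.
  rewrite <- RInt_scalR. 2: apply ex_RInt_plusR; [apply ex_RInt_scalR, ex_RInt_Gi; lra| apply ex_RInt_scalR, ex_RInt_c0].
  apply RInt_extR. intros x Hx. rewrite Rmin_left, Rmax_right in Hx by lra.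
  unfold ls, lam_star, Gi. replace (th + d * q x - th0) with (th - th0 + d * q x) by ring.
  field. apply Rgt_not_eq, den_pos; lra.
Qed.

Definition Dj th := S * ((S + h) * G (th - th0) + l0 * c0 - 1).

Lemma is_derive_Jform th : 0 < th -> th + d < tau ->
  is_derive (fun x => C1 + S * (Psi (tau - x) - Psi (- x)) + I0 x) th (Dj th).
Proof.
  intros H1 H2.
  assert (D1 : is_derive (fun x => Psi (tau - x)) th ((0 + -1) * psi k d (tau - th))).
  { apply (dcomp Psi (fun x => tau - x)). apply is_derive_Psi.
    auto_derive; auto; ring. }
  assert (D2 : is_derive (fun x => Psi (- x)) th (-1 * psi k d (- th))).
  { apply (dcomp Psi (fun x => - x)). apply is_derive_Psi.
    auto_derive; auto; ring. }
  rewrite psi_ged in D1 by lra. rewrite psi_nonpos in D2 by lra.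
  assert (D := dplus _ _ th _ _ (dplus _ _ th _ _ (dconst C1 th) (is_derive_scal _ th S _ (dplus _ _ th _ _ D1 (is_derive_scal _ th (-1) _ D2)))) (is_derive_I0 th)).
  rewrite I0d_G in D. unfold Dj.
  apply (is_derive_ext (fun y => C1 + S * (Psi (tau - y) + -1 * Psi (- y)) + I0 y)). intros; toR; ring.
  replace (S * ((S + h) * G (th - th0) + l0 * c0 - 1)) with
    (0 + S * ((0 + -1) * 1 + -1 * (-1 * 0)) + S * ((S + h) * G (th - th0) + l0 * c0)) by ring.
  exact D.
Qed.

Definition F th := (S + h) * G (th - th0) + l0 * c0.

Lemma c0_pos : 0 < c0.
Proof.
  rewrite c0_val. apply Rdiv_lt_0_compat; auto. rewrite <- ln_1. apply ln_increasing. lra.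
  assert (0 < S / l0) by (apply Rdiv_lt_0_compat; auto). lra.
Qed.

Lemma G_range s : 0 <= G s <= c0.
Proof.
  assert (Hab := Rabs_pos s). split.
  - rewrite <- (G_low (- d - Rabs s)) by lra. apply G_mono. assert (H := Rle_abs (-s)). rewrite Rabs_Ropp in H. lra.
  - rewrite <- (G_high (d + Rabs s)) by (assert (H := Rabs_pos s); lra). apply G_mono. assert (H := Rle_abs s). lra.
Qed.

Lemma F_mono a b : a <= b -> F a <= F b.
Proof. intros H. unfold F. assert (G (a - th0) <= G (b - th0)) by (apply G_mono; lra). nra. Qed.

Lemma F_range th : l0 * c0 <= F th <= (S + h + l0) * c0.
Proof. unfold F. assert (H := G_range (th - th0)). nra. Qed.

Lemma F_low th : th <= th0 - d -> F th = l0 * c0.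
Proof. intros H. unfold F. rewrite G_low by lra. ring. Qed.

Lemma F_high th : th0 + d <= th -> F th = (S + h + l0) * c0.
Proof. intros H. unfold F. rewrite G_high by lra. ring. Qed.

Lemma F_th0 : F th0 = 1 + h * G 0.
Proof. unfold F. replace (th0 - th0) with 0 by ring. assert (H := G0_id). lra. Qed.

Lemma F_cont : continuity F.
Proof.
  intros x. unfold F. apply continuity_pt_plus; [|cst]. apply continuity_pt_mult; [cst|].
  apply (continuity_pt_comp (fun t => t - th0) G). apply continuity_pt_minus. apply continuity_pt_id. cst.
  apply G_cont.
Qed.

Lemma F_lower thh W : th0 - d < thh < th0 + d -> F thh = 1 -> 0 < W ->
  exists m0, 0 < m0 /\ forall th, Rabs (th - thh) <= W ->
    (thh <= th -> m0 * (th - thh) <= F th - 1) /\ (th <= thh -> m0 * (thh - th) <= 1 - F th).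
Proof.
  intros Hthh HF HW.
  set (sh := thh - th0).
  assert (Hsh : Rabs sh < d) by (apply Rabs_def1; unfold sh; lra).
  set (eta := (d - Rabs sh) / 4).
  assert (Heta : 0 < eta) by (unfold eta; lra).
  set (A := Rmax 0 (eta - sh)). set (B := Rmin d (d - sh - eta)).
  assert (Hs1 := Rle_abs sh). assert (Hs2 := Rle_abs (- sh)). rewrite Rabs_Ropp in Hs2.
  assert (HA : 0 <= A) by (unfold A; mm; lra).
  assert (HAB : A < B) by (unfold A, B, eta in *; mm; lra).
  assert (HB : B <= d) by (unfold B; mm; lra).
  set (cA := (pw k (B/d) - pw k (A/d)) * (k / d) / (S + l0)).
  assert (HcA : 0 < cA).
  { unfold cA. apply Rdiv_lt_0_compat; [|lra]. apply Rmult_lt_0_compat; [|apply Rdiv_lt_0_compat; lra].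
    assert (pw k (A/d) < pw k (B/d)); [|lra]. apply pw_lt_mono; auto. split. apply Rdiv_le_0_compat; lra.
    unfold Rdiv; apply Rmult_lt_compat_r; [apply Rinv_0_lt_compat|]; lra. }
  assert (Hsl : forall s1 s2, sh - eta <= s1 -> s1 <= s2 -> s2 <= sh + eta -> cA * (s2 - s1) <= G s2 - G s1).
  { intros s1 s2 H1 H2 H3. eapply Rle_trans; [|apply (G_slope A B s1 s2); auto].
    - right. unfold cA. field. lra.
    - unfold A; mm; lra.
    - unfold B; mm; lra. }
  exists ((S + h) * cA * (eta / (eta + W))). split.
  { apply Rmult_lt_0_compat. apply Rmult_lt_0_compat; lra. apply Rdiv_lt_0_compat; lra. }
  assert (Hr : eta / (eta + W) <= 1) by (apply div_le_1; lra).
  assert (Hr0 : 0 < eta / (eta + W)) by (apply Rdiv_lt_0_compat; lra).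
  intros th Hth. apply Rabs_le_between in Hth.
  assert (HFd : forall a b, a <= b -> F b - F a = (S + h) * (G (b - th0) - G (a - th0))) by (intros; unfold F; ring).
  split; intros Hle.
  - destruct (Rle_dec (th - thh) eta) as [Hc|Hc].
    + assert (Hg := Hsl sh (th - th0) ltac:(lra) ltac:(unfold sh; lra) ltac:(unfold sh; lra)).
      replace (F th - 1) with (F th - F thh) by lra. rewrite HFd by lra. fold sh.
      replace (th - th0 - sh) with (th - thh) in Hg by (unfold sh; ring).
      assert (0 <= th - thh) by lra.
      apply Rle_trans with ((S + h) * cA * (th - thh)).
      * replace ((S + h) * cA * (eta / (eta + W)) * (th - thh)) with ((S + h) * cA * (th - thh) * (eta / (eta + W))) by ring.
        assert (0 <= (S + h) * cA * (th - thh)) by (apply Rmult_le_pos; [apply Rmult_le_pos|]; lra).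
        nra.
      * replace ((S + h) * cA * (th - thh)) with ((S + h) * (cA * (th - thh))) by ring.
        apply Rmult_le_compat_l; lra.
    + assert (Hg := Hsl sh (sh + eta) ltac:(lra) ltac:(lra) ltac:(lra)).
      assert (Hm := F_mono (thh + eta) th ltac:(lra)).
      replace (F th - 1) with ((F th - F (thh + eta)) + (F (thh + eta) - F thh)) by lra.
      rewrite (HFd thh (thh + eta)) by lra. fold sh. replace (thh + eta - th0) with (sh + eta) by (unfold sh; ring).
      replace (sh + eta - sh) with eta in Hg by ring.
      assert (Hk1' : (S + h) * cA * (eta / (eta + W)) * (th - thh) <= (S + h) * cA * eta).
      { replace ((S + h) * cA * (eta / (eta + W)) * (th - thh)) with ((S + h) * cA * eta * ((th - thh) / (eta + W))) by (field; lra).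
        assert (0 < (S + h) * cA * eta) by (apply Rmult_lt_0_compat; [apply Rmult_lt_0_compat|]; lra).
        assert ((th - thh) / (eta + W) <= 1) by (apply div_le_1; lra). nra. }
      assert ((S + h) * (cA * eta) <= (S + h) * (G (sh + eta) - G sh)) by (apply Rmult_le_compat_l; lra).
      nra.
  - destruct (Rle_dec (thh - th) eta) as [Hc|Hc].
    + assert (Hg := Hsl (th - th0) sh ltac:(unfold sh; lra) ltac:(unfold sh; lra) ltac:(lra)).
      replace (1 - F th) with (F thh - F th) by lra. rewrite HFd by lra. fold sh.
      replace (sh - (th - th0)) with (thh - th) in Hg by (unfold sh; ring).
      assert (0 <= thh - th) by lra.
      apply Rle_trans with ((S + h) * cA * (thh - th)).
      * replace ((S + h) * cA * (eta / (eta + W)) * (thh - th)) with ((S + h) * cA * (thh - th) * (eta / (eta + W))) by ring.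
        assert (0 <= (S + h) * cA * (thh - th)) by (apply Rmult_le_pos; [apply Rmult_le_pos|]; lra).
        nra.
      * replace ((S + h) * cA * (thh - th)) with ((S + h) * (cA * (thh - th))) by ring.
        apply Rmult_le_compat_l; lra.
    + assert (Hg := Hsl (sh - eta) sh ltac:(lra) ltac:(lra) ltac:(lra)).
      assert (Hm := F_mono th (thh - eta) ltac:(lra)).
      replace (1 - F th) with ((F (thh - eta) - F th) + (F thh - F (thh - eta))) by lra.
      rewrite (HFd (thh - eta) thh) by lra. fold sh. replace (thh - eta - th0) with (sh - eta) by (unfold sh; ring).
      replace (sh - (sh - eta)) with eta in Hg by ring.
      assert (Hk1' : (S + h) * cA * (eta / (eta + W)) * (thh - th) <= (S + h) * cA * eta).
      { replace ((S + h) * cA * (eta / (eta + W)) * (thh - th)) with ((S + h) * cA * eta * ((thh - th) / (eta + W))) by (field; lra).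
        assert (0 < (S + h) * cA * eta) by (apply Rmult_lt_0_compat; [apply Rmult_lt_0_compat|]; lra).
        assert ((thh - th) / (eta + W) <= 1) by (apply div_le_1; lra). nra. }
      assert ((S + h) * (cA * eta) <= (S + h) * (G sh - G (sh - eta))) by (apply Rmult_le_compat_l; lra).
      nra.
Qed.

Lemma G_loclip sh : Rabs sh < d -> sh <> 0 ->
  exists rho L1, 0 < rho /\ 0 < L1 /\ forall s, Rabs (s - sh) <= rho -> Rabs (G s - G sh) <= L1 * Rabs (s - sh).
Proof.
  intros Hd' Hn.
  destruct (Rlt_dec 0 sh) as [Hp|Hp].
  - exists (sh / 2), (Lp (sh / 2) / l0). split; [lra|]. split.
    { apply Rdiv_lt_0_compat; auto. apply Lp_pos; lra. }
    intros s Hs. apply Rabs_le_between in Hs.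
    destruct (Rle_dec sh s) as [H|H].
    + assert (H1 := G_lip_pos (sh/2) sh s ltac:(lra) ltac:(lra) H).
      assert (H2 := G_mono sh s H).
      rewrite !Rabs_pos_eq by lra. replace (Lp (sh / 2) / l0 * (s - sh)) with (Lp (sh / 2) * (s - sh) / l0) by (field; lra). lra.
    + assert (H1 := G_lip_pos (sh/2) s sh ltac:(lra) ltac:(lra) ltac:(lra)).
      assert (H2 := G_mono s sh ltac:(lra)).
      rewrite Rabs_left1 by lra. rewrite (Rabs_left1 (s - sh)) by lra.
      replace (Lp (sh / 2) / l0 * - (s - sh)) with (Lp (sh / 2) * (sh - s) / l0) by (field; lra). lra.
  - assert (Hneg : sh < 0) by lra.
    assert (Hs' : - sh < d) by (rewrite Rabs_left in Hd'; lra).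
    set (a := - sh / 2).
    exists a, (/ (d * Qm a * l0)). split; [unfold a; lra|]. split.
    { apply Rinv_0_lt_compat. assert (H := Qm_pos a). apply Rmult_lt_0_compat; [apply Rmult_lt_0_compat|]; lra. }
    assert (Ha : 0 < a < d) by (unfold a; lra).
    intros s Hs. apply Rabs_le_between in Hs.
    destruct (Rle_dec sh s) as [H|H].
    + assert (H1 := G_lip_neg a sh s Ha H ltac:(unfold a in *; lra)).
      assert (H2 := G_mono sh s H).
      rewrite !Rabs_pos_eq by lra. unfold Rdiv in H1. lra.
    + assert (H1 := G_lip_neg a s sh Ha ltac:(lra) ltac:(unfold a in *; lra)).
      assert (H2 := G_mono s sh ltac:(lra)).
      rewrite Rabs_left1 by lra. rewrite (Rabs_left1 (s - sh)) by lra. unfold Rdiv in H1. lra.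
Qed.

Lemma F_upper thh : th0 - d < thh < th0 + d -> F thh = 1 -> thh <> th0 ->
  exists M0, 0 < M0 /\ forall th,
    (thh <= th -> F th - 1 <= M0 * (th - thh)) /\ (th <= thh -> 1 - F th <= M0 * (thh - th)).
Proof.
  intros Hthh HF Hne.
  destruct (G_loclip (thh - th0)) as [rho [L1 [Hrho [HL1 HG]]]].
  { apply Rabs_def1; lra. } { lra. }
  assert (Hc0 := c0_pos).
  set (Bnd := (S + h + l0) * c0 + 1).
  assert (HB : 0 < Bnd) by (unfold Bnd; nra).
  exists (Rmax ((S + h) * L1) (Bnd / rho)). split.
  { apply Rlt_le_trans with (Bnd / rho). apply Rdiv_lt_0_compat; auto. apply Rmax_r. }
  assert (M1 := Rmax_l ((S + h) * L1) (Bnd / rho)). assert (M2 := Rmax_r ((S + h) * L1) (Bnd / rho)).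
  set (M0 := Rmax ((S + h) * L1) (Bnd / rho)) in *.
  assert (HFd : forall a, F a - F thh = (S + h) * (G (a - th0) - G (thh - th0))) by (intros; unfold F; ring).
  intros th. assert (Hr := F_range th).
  split; intros Hle.
  - destruct (Rle_dec (th - thh) rho) as [Hc|Hc].
    + assert (Hg := HG (th - th0) ltac:(replace (th - th0 - (thh - th0)) with (th - thh) by ring; rewrite Rabs_pos_eq; lra)).
      replace (th - th0 - (thh - th0)) with (th - thh) in Hg by ring. rewrite (Rabs_pos_eq (th - thh)) in Hg by lra.
      replace (F th - 1) with (F th - F thh) by lra. rewrite HFd.
      assert (H1 : (S + h) * (G (th - th0) - G (thh - th0)) <= (S + h) * (L1 * (th - thh))).
      { apply Rmult_le_compat_l. lra. assert (H := Rle_abs (G (th - th0) - G (thh - th0))). lra. }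
      assert (0 <= th - thh) by lra. nra.
    + assert (Bnd <= Bnd / rho * (th - thh)).
      { replace Bnd with (Bnd / rho * rho) at 1 by (field; lra). apply Rmult_le_compat_l.
        left; apply Rdiv_lt_0_compat; auto. lra. }
      assert (Bnd / rho * (th - thh) <= M0 * (th - thh)) by (apply Rmult_le_compat_r; lra).
      unfold Bnd in *. lra.
  - destruct (Rle_dec (thh - th) rho) as [Hc|Hc].
    + assert (Hg := HG (th - th0) ltac:(replace (th - th0 - (thh - th0)) with (th - thh) by ring; rewrite Rabs_left1; lra)).
      replace (th - th0 - (thh - th0)) with (th - thh) in Hg by ring. rewrite (Rabs_left1 (th - thh)) in Hg by lra.
      replace (1 - F th) with (- (F th - F thh)) by lra. rewrite HFd.
      assert (H1 : (S + h) * (- (G (th - th0) - G (thh - th0))) <= (S + h) * (L1 * - (th - thh))).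
      { apply Rmult_le_compat_l. lra. assert (H := Rle_abs (- (G (th - th0) - G (thh - th0)))). rewrite Rabs_Ropp in H. lra. }
      assert (0 <= thh - th) by lra. nra.
    + assert (Bnd <= Bnd / rho * (thh - th)).
      { replace Bnd with (Bnd / rho * rho) at 1 by (field; lra). apply Rmult_le_compat_l.
        left; apply Rdiv_lt_0_compat; auto. lra. }
      assert (Bnd / rho * (thh - th) <= M0 * (thh - th)) by (apply Rmult_le_compat_r; lra).
      unfold Bnd in *. assert (0 < l0 * c0) by nra. lra.
Qed.

Lemma is_derive_J th : 0 <= th0 <= tau -> 0 < th -> th + d < tau ->
  is_derive (J_KL S h l0 k d tau th0) th (Dj th).
Proof.
  intros H0 H1 H2.
  apply (is_derive_ext_loc (fun x => C1 + S * (Psi (tau - x) - Psi (- x)) + I0 x)).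
  2: apply is_derive_Jform; auto.
  assert (Hr : 0 < Rmin th (tau - d - th)) by (mm; lra).
  exists (mkposreal _ Hr). intros y Hy. simpl in Hy. unfold ball in Hy; simpl in Hy.
  unfold AbsRing_ball, abs, minus, plus, opp in Hy; simpl in Hy. apply Rabs_lt_between in Hy.
  symmetry. apply J_eq; mm; lra.
Qed.

End PsiSec.

Lemma mvt_quad_lo (f df : R -> R) lo hi x0 c :
  (forall x, lo < x < hi -> is_derive f x (df x)) -> lo < x0 < hi ->
  (forall x, lo < x < hi -> x0 <= x -> c * (x - x0) <= df x) ->
  (forall x, lo < x < hi -> x <= x0 -> df x <= c * (x - x0)) ->
  forall x, lo < x < hi -> c / 2 * (x - x0) ^ 2 <= f x - f x0.
Proof.
  intros Hd Hx0 H1 H2 x Hx.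
  assert (Hg : forall y, lo < y < hi -> is_derive (fun y => f y - c / 2 * (y - x0) ^ 2) y (df y - c * (y - x0))).
  { intros y Hy.
    apply (is_derive_ext (fun y => f y + (- (c / 2)) * ((y - x0) * (y - x0)))). intros; simpl; toR; ring.
    replace (df y - c * (y - x0)) with (df y + (- (c / 2)) * (2 * (y - x0))) by field.
    apply (dplus f (fun y => - (c / 2) * ((y - x0) * (y - x0)))). apply Hd; auto.
    auto_derive; auto; ring. }
  destruct (MVT_gen (fun y => f y - c / 2 * (y - x0) ^ 2) x0 x (fun y => df y - c * (y - x0))) as [z [Hz Heq]].
  - intros y Hy. apply Hg. mm; lra.
  - intros y Hy. apply derivable_continuous_pt. exists (df y - c * (y - x0)). apply is_derive_Reals, Hg. mm; lra.
  - replace (x0 - x0) with 0 in Heq by ring.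
    assert (lo < z < hi) by (mm; lra).
    assert (HH : 0 <= (df z - c * (z - x0)) * (x - x0)).
    { destruct (Rle_dec x0 x) as [Hc|Hc].
      - rewrite Rmin_left, Rmax_right in Hz by lra. assert (Hq := H1 z ltac:(lra) ltac:(lra)). nra.
      - rewrite Rmin_right, Rmax_left in Hz by lra. assert (Hq := H2 z ltac:(lra) ltac:(lra)). nra. }
    simpl in Heq. lra.
Qed.

Lemma mvt_quad_hi (f df : R -> R) lo hi x0 c :
  (forall x, lo < x < hi -> is_derive f x (df x)) -> lo < x0 < hi ->
  (forall x, lo < x < hi -> x0 <= x -> df x <= c * (x - x0)) ->
  (forall x, lo < x < hi -> x <= x0 -> c * (x - x0) <= df x) ->
  forall x, lo < x < hi -> f x - f x0 <= c / 2 * (x - x0) ^ 2.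
Proof.
  intros Hd Hx0 H1 H2 x Hx.
  assert (H := mvt_quad_lo (fun y => - f y) (fun y => - df y) lo hi x0 (- c)).
  assert (H' : - c / 2 * (x - x0) ^ 2 <= - f x - - f x0).
  { apply H; auto.
    - intros y Hy. apply (is_derive_ext (fun y => -1 * f y)). intros; toR; ring.
      replace (- df y) with (-1 * df y) by ring. apply is_derive_scal. apply Hd; auto.
    - intros y Hy Hle. assert (Hq := H1 y Hy Hle). lra.
    - intros y Hy Hle. assert (Hq := H2 y Hy Hle). lra. }
  lra.
Qed.

Lemma ln_lt_x x : 0 < x -> ln (1 + x) < x.
Proof.
  intros Hx. rewrite <- (ln_exp x) at 2. apply ln_increasing. lra. apply exp_ineq1. lra.
Qed.

Theorem proposition1 (S lambda0 kappa delta tau alpha beta theta0 h : R)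
  (HS : 0 < S) (Hl0 : 0 < lambda0) (Hk : 0 < kappa < 1/2) (Hd : 0 < delta)
  (Htau : 0 < tau) (Hab : alpha < beta)
  (HTheta : 0 <= alpha - delta /\ beta + delta <= tau - delta)
  (Hth0 : alpha < theta0 < beta)
  (Hh : h > S / ln (1 + S / lambda0) - S - lambda0) :
  let J := J_KL S h lambda0 kappa delta tau theta0 in
  let inTheta := fun th => alpha - delta < th < beta + delta in
  exists thhat : R,
    inTheta thhat /\
    (forall th, inTheta th -> ex_derive J th) /\
    (forall th, inTheta th -> th <> thhat -> J thhat < J th) /\
    (forall th, inTheta th -> (Derive J th = 0 <-> th = thhat)) /\
    (h > 0 -> theta0 - delta < thhat < theta0) /\
    (h < 0 -> theta0 < thhat < theta0 + delta) /\
    (h = 0 -> thhat = theta0) /\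
    (h <> 0 ->
      exists m M : R, 0 < m /\ 0 < M /\
        forall th, inTheta th ->
          m * Rabs (th - thhat) <= Rabs (Derive J th) <= M * Rabs (th - thhat) /\
          m / 2 * (th - thhat) ^ 2 <= J th - J thhat <= M / 2 * (th - thhat) ^ 2).
Proof.
  intros J inTheta.
  destruct Hk as [Hk0 Hk1']. assert (Hk1 : kappa < 1) by lra.
  destruct HTheta as [HT1 HT2].
  set (L := ln (1 + S / lambda0)).
  assert (HSl : 0 < S / lambda0) by (apply Rdiv_lt_0_compat; auto).
  assert (HL : 0 < L) by (unfold L; rewrite <- ln_1; apply ln_increasing; lra).
  assert (HLx : L < S / lambda0) by (unfold L; apply ln_lt_x; auto).
  assert (HSL : lambda0 < S / L).
  { apply Rmult_lt_reg_r with L; auto. unfold Rdiv. rewrite Rmult_assoc, Rinv_l by lra.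
    apply Rmult_lt_reg_l with (/ lambda0). apply Rinv_0_lt_compat; auto.
    rewrite <- Rmult_assoc, Rinv_l, Rmult_1_l by lra. unfold Rdiv in HLx. lra. }
  fold L in Hh.
  assert (HSh : 0 < S + h) by lra.
  assert (Hc0 : c0 S lambda0 = L / S) by (apply c0_val; auto).
  set (Fn := F kappa delta S lambda0 h theta0).
  assert (FA : Fn (theta0 - delta) < 1).
  { unfold Fn. rewrite F_low by (auto; lra). rewrite Hc0.
    replace (lambda0 * (L / S)) with (L / (S / lambda0)) by (field; lra).
    apply Rmult_lt_reg_r with (S / lambda0); auto. unfold Rdiv at 1. rewrite Rmult_assoc, Rinv_l by lra. lra. }
  assert (FB : 1 < Fn (theta0 + delta)).
  { unfold Fn. rewrite F_high by (auto; lra). rewrite Hc0.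
    assert (H1 : S / L < S + h + lambda0) by lra.
    replace ((S + h + lambda0) * (L / S)) with ((S + h + lambda0) / (S / L)) by (field; lra).
    assert (0 < S / L) by (apply Rdiv_lt_0_compat; auto).
    apply Rmult_lt_reg_r with (S / L); auto. unfold Rdiv at 2. rewrite Rmult_assoc, Rinv_l by lra. lra. }
  destruct (IVT_gen Fn (theta0 - delta) (theta0 + delta) 1) as [thh [Hthh HF]].
  { apply F_cont; auto. }
  { split; [apply Rle_trans with (Fn (theta0 - delta)); [apply Rmin_l|lra]
           |apply Rle_trans with (Fn (theta0 + delta)); [lra|apply Rmax_r]]. }
  rewrite Rmin_left, Rmax_right in Hthh by lra.
  assert (Hthh' : theta0 - delta < thh < theta0 + delta).
  { split; destruct Hthh as [H1 H2]; destruct H1 as [H1|H1]; destruct H2 as [H2|H2]; try lra;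
    subst; lra. }
  assert (HinT : inTheta thh) by (unfold inTheta; lra).
  set (Dn := Dj kappa delta S lambda0 h theta0).
  assert (HDF : forall th, Dn th = S * (Fn th - 1)) by (intros; unfold Dn, Dj, Fn, F; ring).
  assert (Hder : forall th, inTheta th -> is_derive J th (Dn th)).
  { intros th Hth. unfold J, Dn. apply is_derive_J; auto; unfold inTheta in Hth; lra. }
  assert (HDer : forall th, inTheta th -> Derive J th = Dn th).
  { intros th Hth. apply is_derive_unique. apply Hder; auto. }
  set (W := beta - alpha + 2 * delta).
  destruct (F_lower kappa delta Hk0 Hk1 Hd S lambda0 HS Hl0 h theta0 HSh thh W Hthh' HF ltac:(unfold W; lra))
    as [m0 [Hm0 Hlow]].
  fold Fn in Hlow.
  assert (HW : forall th, inTheta th -> Rabs (th - thh) <= W).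
  { intros th Hth. unfold inTheta in *. apply Rabs_le. unfold W. lra. }
  set (m := S * m0).
  assert (Hm : 0 < m) by (unfold m; apply Rmult_lt_0_compat; auto).
  assert (Lp1 : forall th, inTheta th -> thh <= th -> m * (th - thh) <= Dn th).
  { intros th Hth Hle. rewrite HDF. destruct (Hlow th (HW th Hth)) as [A _].
    assert (A' := A Hle). unfold m. replace (S * m0 * (th - thh)) with (S * (m0 * (th - thh))) by ring.
    apply Rmult_le_compat_l; lra. }
  assert (Lp2 : forall th, inTheta th -> th <= thh -> Dn th <= m * (th - thh)).
  { intros th Hth Hle. rewrite HDF. destruct (Hlow th (HW th Hth)) as [_ A].
    assert (A' := A Hle). unfold m.
    assert (S * (m0 * (thh - th)) <= S * (1 - Fn th)) by (apply Rmult_le_compat_l; lra). lra. }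
  assert (Hquad_lo : forall th, inTheta th -> m / 2 * (th - thh) ^ 2 <= J th - J thh).
  { intros th Hth. apply (mvt_quad_lo J Dn (alpha - delta) (beta + delta) thh m); auto. }
  assert (HFmono := F_mono kappa delta Hk0 Hd S lambda0 HS Hl0 h theta0 HSh). fold Fn in HFmono.
  assert (HG0 := G0_pos kappa delta Hk0 Hk1 Hd S lambda0 HS Hl0).
  assert (HFt0 : Fn theta0 = 1 + h * G kappa delta S lambda0 0) by (apply F_th0; auto).
  assert (Huniq : forall th, inTheta th -> Dn th = 0 -> th = thh).
  { intros th Hth H0. destruct (Rle_dec thh th) as [Hc|Hc].
    - assert (H := Lp1 th Hth Hc). assert (m * (th - thh) <= 0) by lra.
      assert (th - thh <= 0). { apply Rmult_le_reg_l with m; auto. lra. } lra.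
    - assert (H := Lp2 th Hth ltac:(lra)). assert (0 <= m * (th - thh)) by lra.
      assert (0 <= th - thh). { apply Rmult_le_reg_l with m; auto. lra. } lra. }
  assert (HinT0 : inTheta theta0) by (unfold inTheta; lra).
  exists thh. split; [exact HinT|]. split.
  { intros th Hth. exists (Dn th). apply Hder; auto. }
  split.
  { intros th Hth Hne. assert (H := Hquad_lo th Hth).
    assert (0 < (th - thh) ^ 2) by (destruct (Rlt_dec th thh); simpl; nra).
    assert (0 < m / 2 * (th - thh) ^ 2) by (apply Rmult_lt_0_compat; lra).
    lra. }
  split.
  { intros th Hth. rewrite HDer by auto. split.
    - intros H0. apply Huniq; auto.
    - intros ->. rewrite HDF. unfold Fn in *. rewrite HF. ring. }
  split.
  { intros Hpos. split; [lra|].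
    destruct (Rlt_dec thh theta0) as [Hc|Hc]; auto.
    assert (Fn theta0 <= Fn thh) by (apply HFmono; lra).
    assert (0 < h * G kappa delta S lambda0 0) by (apply Rmult_lt_0_compat; lra).
    unfold Fn in *. lra. }
  split.
  { intros Hneg. split; [|lra].
    destruct (Rlt_dec theta0 thh) as [Hc|Hc]; auto.
    assert (Fn thh <= Fn theta0) by (apply HFmono; lra).
    assert (h * G kappa delta S lambda0 0 < 0) by (assert (0 < (-h) * G kappa delta S lambda0 0) by (apply Rmult_lt_0_compat; lra); lra).
    unfold Fn in *. lra. }
  split.
  { intros H0. symmetry. apply Huniq; auto. rewrite HDF. rewrite HFt0, H0. ring. }
  intros Hne.
  assert (Hne0 : thh <> theta0).
  { intros E. rewrite <- E in HFt0. rewrite HF in HFt0.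
    assert (h * G kappa delta S lambda0 0 = 0) by lra.
    apply Rmult_integral in H. destruct H; lra. }
  destruct (F_upper kappa delta Hk0 Hk1 Hd S lambda0 HS Hl0 h theta0 HSh thh Hthh' HF Hne0) as [M0 [HM0 Hup]].
  fold Fn in Hup.
  set (M := S * M0).
  assert (HM : 0 < M) by (unfold M; apply Rmult_lt_0_compat; auto).
  assert (Up1 : forall th, inTheta th -> thh <= th -> Dn th <= M * (th - thh)).
  { intros th Hth Hle. rewrite HDF. destruct (Hup th) as [A _].
    assert (A' := A Hle). unfold M. replace (S * M0 * (th - thh)) with (S * (M0 * (th - thh))) by ring.
    apply Rmult_le_compat_l; lra. }
  assert (Up2 : forall th, inTheta th -> th <= thh -> M * (th - thh) <= Dn th).
  { intros th Hth Hle. rewrite HDF. destruct (Hup th) as [_ A].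
    assert (A' := A Hle). unfold M.
    assert (S * (1 - Fn th) <= S * (M0 * (thh - th))) by (apply Rmult_le_compat_l; lra). lra. }
  exists m, M. split; [auto|]. split; [auto|].
  intros th Hth. split.
  - rewrite HDer by auto. destruct (Rle_dec thh th) as [Hc|Hc].
    + assert (H1 := Lp1 th Hth Hc). assert (H2 := Up1 th Hth Hc).
      rewrite (Rabs_pos_eq (th - thh)) by lra.
      assert (0 <= m * (th - thh)) by (apply Rmult_le_pos; lra).
      rewrite Rabs_pos_eq by lra. lra.
    + assert (H1 := Lp2 th Hth ltac:(lra)). assert (H2 := Up2 th Hth ltac:(lra)).
      rewrite (Rabs_left1 (th - thh)) by lra.
      assert (m * (th - thh) <= 0) by (assert (0 <= m * (thh - th)) by (apply Rmult_le_pos; lra); lra).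
      rewrite Rabs_left1 by lra. lra.
  - split.
    + apply Hquad_lo; auto.
    + apply (mvt_quad_hi J Dn (alpha - delta) (beta + delta) thh M); auto.
Qed.
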